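(* Let $V$ be a two-dimensional real vector space equipped with a seminorm $|\cdot|_V$. For every set $X$, every $\sigma$-algebra $\Sigma$ on $X$ and every vector measure $\mu:\Sigma\to V$, $$|\mu|_V(X)=\tfrac12\,\mathrm{Per}_V(\mathcal{R}(\mu))$$ (and more generally $|\mu|_V(A)=\tfrac12\mathrm{Per}_V(\mathcal{R}_A(\mu))$ for every $A\in\Sigma$).
   Context: A vector measure is a countably additive map $\mu:\Sigma\to V$. Total variation: $|\mu|_V(A)=\sup\{\sum_{i=1}^m|\mu(E_i)|_V : E_1,\dots,E_m\in\Sigma \text{ pairwise disjoint subsets of } A\}$. Range: $\mathcal{R}_A(\mu)=\overline{\mathrm{conv}}\{\mu(E):E\in\Sigma,E\subseteq A\}$, $\mathcal{R}(\mu)=\mathcal{R}_X(\mu)$. Perimeter (with $\dim V=2$): for a convex polygon $P$ (convex hull of finitely many points) with vertices $v_1,\dots,v_\ell$ listed in cyclic order along its boundary, $\mathrm{Per}_V(P)=\sum_{i=1}^\ell|v_i-v_{i-1}|_V$ with $v_0=v_\ell$ (so a segment $[a,b]$ has perimeter $2|b-a|_V$); for a convex set $C\subseteq V$, $\mathrm{Per}_V(C)=\sup\{\mathrm{Per}_V(P): P\subseteq C \text{ a convex polygon}\}$. *)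

(* Defs.v *)
From Stdlib Require Import Reals Lra Lia Arith.
Open Scope R_scope.

(* The two-dimensional real vector space V is modelled as R*R (every
   2-dimensional real vector space is linearly isomorphic to R^2, and the
   seminorm is transported along the isomorphism). *)
Definition V2 := (R * R)%type.

Definition vadd (a b : V2) : V2 := (fst a + fst b, snd a + snd b).
Definition vsub (a b : V2) : V2 := (fst a - fst b, snd a - snd b).
Definition vscale (c : R) (a : V2) : V2 := (c * fst a, c * snd a).
Definition v0 : V2 := (0, 0).

Definition seminorm (N : V2 -> R) : Prop :=
  (forall a b, N (vadd a b) <= N a + N b) /\
  (forall c a, N (vscale c a) = Rabs c * N a).

Fixpoint rsum (f : nat -> R) (m : nat) : R :=
  match m with
  | O => 0
  | S k => rsum f k + f k
  end.

Fixpoint vsum (f : nat -> V2) (m : nat) : V2 :=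
  match m with
  | O => v0
  | S k => vadd (vsum f k) (f k)
  end.

Definition sigma_algebra {X : Type} (Sigma : (X -> Prop) -> Prop) : Prop :=
  Sigma (fun _ => True) /\
  (forall E, Sigma E -> Sigma (fun x => ~ E x)) /\
  (forall E : nat -> X -> Prop, (forall n, Sigma (E n)) ->
      Sigma (fun x => exists n, E n x)).

(* countably additive map mu : Sigma -> V (convergence in the standard
   (finite-dimensional) topology of V, i.e. componentwise) *)
Definition vector_measure {X : Type} (Sigma : (X -> Prop) -> Prop)
  (mu : (X -> Prop) -> V2) : Prop :=
  forall E : nat -> X -> Prop,
    (forall n, Sigma (E n)) ->
    (forall n m x, n <> m -> E n x -> E m x -> False) ->
    Un_cv (fun n => sum_f_R0 (fun i => fst (mu (E i))) n)
          (fst (mu (fun x => exists n, E n x))) /\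
    Un_cv (fun n => sum_f_R0 (fun i => snd (mu (E i))) n)
          (snd (mu (fun x => exists n, E n x))).

(* The set of values sum_i |mu(E_i)|_V over finite families of pairwise
   disjoint measurable subsets of A; |mu|_V(A) is its supremum. *)
Definition total_variation_set {X : Type} (N : V2 -> R)
  (Sigma : (X -> Prop) -> Prop) (mu : (X -> Prop) -> V2) (A : X -> Prop)
  : R -> Prop :=
  fun r => exists (m : nat) (E : nat -> X -> Prop),
    (forall i, (i < m)%nat -> Sigma (E i)) /\
    (forall i x, (i < m)%nat -> E i x -> A x) /\
    (forall i j x, (i < m)%nat -> (j < m)%nat -> i <> j -> E i x -> E j x -> False) /\
    r = rsum (fun i => N (mu (E i))) m.

Definition conv (S : V2 -> Prop) : V2 -> Prop :=
  fun p => exists (n : nat) (w : nat -> R) (q : nat -> V2),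
    (forall i, (i < n)%nat -> 0 <= w i /\ S (q i)) /\
    rsum w n = 1 /\
    p = vsum (fun i => vscale (w i) (q i)) n.

Definition closure (S : V2 -> Prop) : V2 -> Prop :=
  fun p => forall eps, 0 < eps -> exists q, S q /\
    Rabs (fst p - fst q) < eps /\ Rabs (snd p - snd q) < eps.

Definition vrange {X : Type} (Sigma : (X -> Prop) -> Prop)
  (mu : (X -> Prop) -> V2) (A : X -> Prop) : V2 -> Prop :=
  closure (conv (fun v => exists E, Sigma E /\ (forall x, E x -> A x) /\ v = mu E)).

Definition pts (v : nat -> V2) (l : nat) : V2 -> Prop :=
  fun p => exists i, (i < l)%nat /\ p = v i.

Definition cross (a b : V2) : R := fst a * snd b - snd a * fst b.

(* v_0, ..., v_(l-1) is the list of vertices of the convex polygon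
   conv{v_0,...,v_(l-1)}, listed in cyclic order along its boundary:
   the v_i are distinct extreme points, and each pair of cyclically
   consecutive vertices spans a supporting line (all vertices on the
   same side, with a consistent orientation). *)
Definition polygon_vertices (v : nat -> V2) (l : nat) : Prop :=
  (forall i j, (i < l)%nat -> (j < l)%nat -> v i = v j -> i = j) /\
  (forall i, (i < l)%nat ->
     ~ conv (fun p => exists j, (j < l)%nat /\ j <> i /\ p = v j) (v i)) /\
  ((forall i j, (i < l)%nat -> (j < l)%nat ->
      0 <= cross (vsub (v (S i mod l)) (v i)) (vsub (v j) (v i))) \/
   (forall i j, (i < l)%nat -> (j < l)%nat ->
      cross (vsub (v (S i mod l)) (v i)) (vsub (v j) (v i)) <= 0)).

Definition polygon_perimeter (N : V2 -> R) (v : nat -> V2) (l : nat) : R :=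
  rsum (fun i => N (vsub (v (S i mod l)) (v i))) l.

(* Set of perimeters of convex polygons contained in C; Per_V(C) is its
   supremum. *)
Definition perimeter_set (N : V2 -> R) (C : V2 -> Prop) : R -> Prop :=
  fun r => exists (v : nat -> V2) (l : nat),
    polygon_vertices v l /\
    (forall p, conv (pts v l) p -> C p) /\
    r = polygon_perimeter N v l.

(* Main.v *)
Require Import Defs.
From Stdlib Require Import Reals Lra Lia Arith Psatz Classical FunctionalExtensionality PropExtensionality ClassicalEpsilon.
Open Scope R_scope.
Set Warnings "-deprecated".

Lemma rsum_ext f g m : (forall i, (i < m)%nat -> f i = g i) -> rsum f m = rsum g m.
Proof. induction m; simpl; intros H; auto. rewrite IHm by (intros; apply H; lia). rewrite H by lia. auto. Qed.

Lemma rsum_plus f g m : rsum (fun i => f i + g i) m = rsum f m + rsum g m.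
Proof. induction m; simpl; [lra|rewrite IHm; lra]. Qed.

Lemma rsum_scal c f m : rsum (fun i => c * f i) m = c * rsum f m.
Proof. induction m; simpl; [lra|rewrite IHm; lra]. Qed.

Lemma rsum_opp f m : rsum (fun i => - f i) m = - rsum f m.
Proof. induction m; simpl; [lra|rewrite IHm; lra]. Qed.

Lemma rsum_zero m : rsum (fun _ => 0) m = 0.
Proof. induction m; simpl; [lra|rewrite IHm; lra]. Qed.

Lemma rsum_le f g m : (forall i, (i < m)%nat -> f i <= g i) -> rsum f m <= rsum g m.
Proof. induction m; simpl; intros H; [lra|]. assert (f m <= g m) by (apply H; lia).
 assert (rsum f m <= rsum g m) by (apply IHm; intros; apply H; lia). lra. Qed.

Lemma rsum_nonneg f m : (forall i, (i < m)%nat -> 0 <= f i) -> 0 <= rsum f m.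
Proof. intros H. rewrite <- (rsum_zero m). apply rsum_le. auto. Qed.

Lemma rsum_abs f m : Rabs (rsum f m) <= rsum (fun i => Rabs (f i)) m.
Proof. induction m; simpl. rewrite Rabs_R0; lra.
 eapply Rle_trans. apply Rabs_triang. lra. Qed.

Lemma rsum_add_last f m : rsum f (S m) = rsum f m + f m.
Proof. reflexivity. Qed.

Lemma rsum_shift f m : rsum f (S m) = f 0%nat + rsum (fun i => f (S i)) m.
Proof. induction m; simpl in *; [lra|]. rewrite IHm. lra. Qed.

Lemma rsum_split f m k : rsum f (m + k) = rsum f m + rsum (fun i => f (m + i)%nat) k.
Proof. induction k; simpl. rewrite Nat.add_0_r; lra. rewrite Nat.add_succ_r. simpl. rewrite IHk. lra. Qed.

Lemma rsum_exchange (f : nat -> nat -> R) m n :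
  rsum (fun i => rsum (fun j => f i j) n) m = rsum (fun j => rsum (fun i => f i j) m) n.
Proof. induction m; simpl. rewrite rsum_zero; auto.
 rewrite IHm. rewrite <- rsum_plus. auto. Qed.

Lemma rsum_telescope (f : nat -> R) m : rsum (fun i => f (S i) - f i) m = f m - f 0%nat.
Proof. induction m; simpl; [lra|]. rewrite IHm. lra. Qed.

Lemma rsum_even_odd (f : nat -> R) K : rsum f (2*K) = rsum (fun k => f (2*k)%nat + f (2*k+1)%nat) K.
Proof. induction K. simpl; auto. replace (2 * S K)%nat with (S (S (2*K))) by lia.
 rewrite !rsum_add_last, IHK. replace (S (2*K)) with (2*K+1)%nat by lia. lra. Qed.

Lemma rsum_single (f : nat -> R) m j : (j < m)%nat -> (forall i, (i < m)%nat -> i <> j -> f i = 0) -> rsum f m = f j.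
Proof. induction m; intros Hj H; [lia|]. simpl. destruct (Nat.eq_dec j m).
 subst. rewrite (rsum_ext f (fun _ => 0)). rewrite rsum_zero; lra. intros; apply H; lia.
 rewrite IHm by (try lia; intros; apply H; lia). rewrite (H m) by lia. lra. Qed.

Lemma vsum_fst f m : fst (vsum f m) = rsum (fun i => fst (f i)) m.
Proof. induction m; simpl; auto. rewrite IHm; auto. Qed.
Lemma vsum_snd f m : snd (vsum f m) = rsum (fun i => snd (f i)) m.
Proof. induction m; simpl; auto. rewrite IHm; auto. Qed.

Lemma V2_eq (a b : V2) : fst a = fst b -> snd a = snd b -> a = b.
Proof. destruct a, b; simpl; intros; subst; auto. Qed.

Lemma vsum_ext f g m : (forall i, (i < m)%nat -> f i = g i) -> vsum f m = vsum g m.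
Proof. induction m; simpl; intros H; auto. rewrite IHm by (intros; apply H; lia). rewrite H by lia. auto. Qed.

Lemma cross_vsum_r d f m : cross d (vsum f m) = rsum (fun i => cross d (f i)) m.
Proof. unfold cross. rewrite vsum_fst, vsum_snd.
 rewrite <- (rsum_scal (fst d)), <- (rsum_scal (snd d)).
 unfold Rminus. rewrite <- rsum_opp, <- rsum_plus. apply rsum_ext; intros; lra. Qed.

Lemma Rabs_m1' : Rabs (-1) = 1.
Proof. rewrite Rabs_left; lra. Qed.

Section SN.
Variable N : V2 -> R.
Hypothesis HN : seminorm N.

Lemma sn_tri a b : N (vadd a b) <= N a + N b.
Proof. apply HN. Qed.
Lemma sn_hom c a : N (vscale c a) = Rabs c * N a.
Proof. apply HN. Qed.
Lemma sn_zero : N v0 = 0.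
Proof. replace v0 with (vscale 0 v0) by (unfold vscale, v0; simpl; f_equal; lra).
 rewrite sn_hom, Rabs_R0; lra. Qed.
Lemma sn_nonneg a : 0 <= N a.
Proof. pose proof (sn_tri a (vscale (-1) a)). rewrite sn_hom in H.
 replace (vadd a (vscale (-1) a)) with v0 in H by (unfold vadd, vscale, v0; destruct a; simpl; f_equal; lra).
 rewrite sn_zero in H. rewrite Rabs_m1' in H. lra. Qed.
Lemma sn_opp a : N (vscale (-1) a) = N a.
Proof. rewrite sn_hom, Rabs_m1'; lra. Qed.
Lemma sn_sub_sym a b : N (vsub a b) = N (vsub b a).
Proof. replace (vsub a b) with (vscale (-1) (vsub b a)) by (unfold vsub, vscale; destruct a, b; simpl; f_equal; lra).
 apply sn_opp. Qed.
Lemma sn_ext a b : a = b -> N a = N b. Proof. intros ->; auto. Qed.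
Lemma sn_vsum f m : N (vsum f m) <= rsum (fun i => N (f i)) m.
Proof. induction m; simpl. rewrite sn_zero; lra. eapply Rle_trans. apply sn_tri. lra. Qed.
Lemma sn_bound a : N a <= Rabs (fst a) * N (1,0) + Rabs (snd a) * N (0,1).
Proof. destruct a as [x y]. assert (E: (x,y) = (vadd (vscale x (1,0)) (vscale y (0,1))))
  by (unfold vadd, vscale; simpl; f_equal; lra). simpl. rewrite E at 1.
 eapply Rle_trans. apply sn_tri. rewrite !sn_hom. lra. Qed.
End SN.

Lemma cross_par (u w : V2) : cross u w = 0 -> u <> v0 -> exists t, w = vscale t u.
Proof. destruct u as [a b], w as [c e]; unfold cross, vscale, v0; simpl; intros H Hn.
 destruct (Req_dec a 0).
 - assert (b <> 0) by (intro; apply Hn; subst; auto). exists (e / b). subst.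
   f_equal; field_simplify; auto; nra.
 - exists (c / a). f_equal. field; auto. apply (Rmult_eq_reg_l a); auto. field_simplify; auto. nra. Qed.

Definition vlin (a : R) (p : V2) (b : R) (q : V2) : V2 := vadd (vscale a p) (vscale b q).

Lemma conv_two (S : V2 -> Prop) p q lam : S p -> S q -> 0 <= lam <= 1 ->
  conv S (vlin lam p (1-lam) q).
Proof. intros Hp Hq Hl. exists 2%nat, (fun i => if Nat.eqb i 0 then lam else 1 - lam),
  (fun i => if Nat.eqb i 0 then p else q). split; [|split].
 - intros i Hi. destruct i as [|[|]]; simpl; split; try lra; auto; lia.
 - simpl. lra.
 - simpl. unfold vlin, vadd, vscale, v0. destruct p, q; simpl. f_equal; lra. Qed.

Lemma collinear3 a b c : cross (vsub b a) (vsub c a) = 0 -> a <> b -> a <> c -> b <> c ->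
  exists lam, 0 <= lam <= 1 /\
   (c = vlin lam a (1-lam) b \/ b = vlin lam a (1-lam) c \/ a = vlin lam b (1-lam) c).
Proof. intros H Hab Hac Hbc.
 assert (Hn : vsub b a <> v0). { intro E. apply Hab. destruct a, b; unfold vsub, v0 in E; simpl in E.
   inversion E. f_equal; lra. }
 destruct (cross_par _ _ H Hn) as [t Ht].
 destruct a as [a1 a2], b as [b1 b2], c as [c1 c2]. unfold vsub, vscale in Ht; simpl in Ht.
 inversion Ht as [[H1 H2]]. unfold vlin, vadd, vscale.
 assert (t <> 0). { intro; subst. apply Hac. f_equal; lra. }
 assert (t <> 1). { intro; subst. apply Hbc. f_equal; lra. }
 destruct (Rle_dec t 1); destruct (Rle_dec 0 t).
 - exists (1 - t). split; [lra|]. left. simpl. replace c1 with (a1 + t*(b1-a1)) by lra. replace c2 with (a2 + t*(b2-a2)) by lra. f_equal; ring.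
 - exists (- t / (1 - t)). split. split. apply Rmult_le_pos; try lra. left; apply Rinv_0_lt_compat; lra.
   apply (Rmult_le_reg_r (1-t)); try lra. unfold Rdiv. rewrite Rmult_assoc, Rinv_l; lra.
   right; right. simpl. replace c1 with (a1 + t*(b1-a1)) by lra. replace c2 with (a2 + t*(b2-a2)) by lra. f_equal; field; lra.
 - exists (1 - 1/t). split. split. assert (1/t < 1). { apply (Rmult_lt_reg_r t); try lra. unfold Rdiv. rewrite Rmult_assoc, Rinv_l; lra. }
   assert (0 < 1/t) by (apply Rdiv_lt_0_compat; lra). lra.
   assert (0 < 1/t) by (apply Rdiv_lt_0_compat; lra). lra.
   right; left. simpl. replace c1 with (a1 + t*(b1-a1)) by lra. replace c2 with (a2 + t*(b2-a2)) by lra. f_equal; field; lra.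
 - lra. Qed.

Section Poly.
Variable v : nat -> V2.
Variable l : nat.
Hypothesis Hd : forall i j, (i < l)%nat -> (j < l)%nat -> v i = v j -> i = j.
Hypothesis He : forall i, (i < l)%nat ->
     ~ conv (fun p => exists j, (j < l)%nat /\ j <> i /\ p = v j) (v i).

Lemma noncol i j k : (i < l)%nat -> (j < l)%nat -> (k < l)%nat -> i <> j -> i <> k -> j <> k ->
  cross (vsub (v j) (v i)) (vsub (v k) (v i)) <> 0.
Proof. intros Hi Hj Hk Hij Hik Hjk H.
 assert (v i <> v j) by (intro E; apply Hij; apply Hd; auto).
 assert (v i <> v k) by (intro E; apply Hik; apply Hd; auto).
 assert (v j <> v k) by (intro E; apply Hjk; apply Hd; auto).
 destruct (collinear3 _ _ _ H H0 H1 H2) as [lam [Hl [E|[E|E]]]].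
 - apply (He k Hk). rewrite E. apply conv_two; auto. exists i; auto. exists j; auto.
 - apply (He j Hj). rewrite E. apply conv_two; auto. exists i; auto. exists k; auto.
 - apply (He i Hi). rewrite E. apply conv_two; auto. exists j; auto. exists k; auto. Qed.

Hypothesis Hc : forall i j, (i < l)%nat -> (j < l)%nat ->
      0 <= cross (vsub (v (S i mod l)) (v i)) (vsub (v j) (v i)).

Lemma mod_S p t : (0 < l)%nat -> (S ((p + t) mod l) mod l = (p + S t) mod l)%nat.
Proof. intros. replace (S ((p+t) mod l)) with ((p+t) mod l + 1)%nat by lia.
 rewrite Nat.add_mod_idemp_l by lia. f_equal; lia. Qed.

Definition rr p t := vsub (v ((p + t) mod l)) (v p).

Lemma mod_small p t : (p + t < l)%nat -> ((p + t) mod l = p + t)%nat.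
Proof. intros. apply Nat.mod_small. auto. Qed.

Lemma idx_distinct p t t' : (p < l)%nat -> (t < l)%nat -> (t' < l)%nat -> t <> t' ->
  ((p + t) mod l <> (p + t') mod l)%nat.
Proof. intros Hp Ht Ht' Hne E.
 assert (l <> 0%nat) by lia.
 pose proof (Nat.div_mod (p+t) l H). pose proof (Nat.div_mod (p+t') l H).
 assert ((p+t)/l < 2)%nat. { apply Nat.div_lt_upper_bound; lia. }
 assert ((p+t')/l < 2)%nat. { apply Nat.div_lt_upper_bound; lia. }
 revert H0 H1 H2 H3. rewrite E. generalize ((p + t') mod l)%nat ((p+t)/l)%nat ((p+t')/l)%nat. intros.
 assert (n0 = n1 \/ n0 < n1 \/ n1 < n0)%nat as [|[|]] by lia; subst; nia. Qed.

Lemma mod_lt p t : (0 < l)%nat -> ((p + t) mod l < l)%nat.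
Proof. intros; apply Nat.mod_upper_bound; lia. Qed.

Lemma mod_self p : (p < l)%nat -> ((p + 0) mod l = p)%nat.
Proof. intros. rewrite Nat.add_0_r. apply Nat.mod_small; auto. Qed.

Lemma plucker (a b c r : V2) :
  cross a c * cross r b = cross a b * cross r c + cross b c * cross r a.
Proof. destruct a, b, c, r; unfold cross; simpl; ring. Qed.

Lemma fan p t t' : (3 <= l)%nat -> (p < l)%nat -> (1 <= t)%nat -> (t < t')%nat -> (t' < l)%nat ->
  0 < cross (rr p t) (rr p t').
Proof. intros Hl Hp Ht Htt' Ht'.
 assert (Hstrict : forall a b, (a < l)%nat -> (b < l)%nat -> (1 <= a)%nat -> (1 <= b)%nat -> a <> b ->
          cross (rr p a) (rr p b) <> 0).
 { intros a b Ha Hb Ha1 Hb1 Hab. unfold rr. apply noncol; try apply mod_lt; try lia.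
   - intro E. rewrite <- (mod_self p Hp) in E at 1. apply (idx_distinct p 0 a); auto; lia.
   - intro E. rewrite <- (mod_self p Hp) in E at 1. apply (idx_distinct p 0 b); auto; lia.
   - apply idx_distinct; auto. }
 assert (F1 : forall a, (1 <= a)%nat -> (a + 1 < l)%nat -> 0 < cross (rr p a) (rr p (S a))).
 { intros a Ha Ha'. assert (0 <= cross (rr p a) (rr p (S a))).
   { pose proof (Hc ((p+a) mod l) p (mod_lt p a ltac:(lia)) Hp) as H.
     rewrite mod_S in H by lia. unfold rr. destruct (v ((p + S a) mod l)), (v ((p+a) mod l)), (v p).
     unfold cross, vsub in *; simpl in *. nra. }
   assert (cross (rr p a) (rr p (S a)) <> 0) by (apply Hstrict; lia). lra. }
 assert (F2 : forall a, (2 <= a)%nat -> (a < l)%nat -> 0 < cross (rr p 1) (rr p a)).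
 { intros a Ha Ha'. assert (0 <= cross (rr p 1) (rr p a)).
   { pose proof (Hc p ((p+a) mod l) Hp (mod_lt p a ltac:(lia))) as H.
     replace (S p mod l)%nat with ((p+1) mod l)%nat in H by (f_equal; lia). exact H. }
   assert (cross (rr p 1) (rr p a) <> 0) by (apply Hstrict; lia). lra. }
 assert (F3 : 0 <= cross (rr p 1) (rr p t)).
 { destruct (Nat.eq_dec t 1). subst. unfold cross; nra. left; apply F2; lia. }
 induction t' as [|t'' IH]; [lia|].
 destruct (Nat.eq_dec t t''). subst. apply F1; lia.
 assert (IH' : 0 < cross (rr p t) (rr p t'')) by (apply IH; lia).
 pose proof (plucker (rr p t) (rr p t'') (rr p (S t'')) (rr p 1)) as Pl.
 assert (0 < cross (rr p 1) (rr p t'')) by (apply F2; lia).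
 assert (0 < cross (rr p 1) (rr p (S t''))) by (apply F2; lia).
 assert (0 < cross (rr p t'') (rr p (S t''))) by (apply F1; lia).
 nra. Qed.
End Poly.

Lemma argmax_fin (b : nat -> R) L : exists t, (t <= L)%nat /\ forall t', (t' <= L)%nat -> b t' <= b t.
Proof. induction L. exists 0%nat. split; auto. intros t' H. replace t' with 0%nat by lia. lra.
 destruct IHL as [t [Ht H]]. destruct (Rle_dec (b (S L)) (b t)).
 - exists t. split; [lia|]. intros t' H'. destruct (Nat.eq_dec t' (S L)). subst; auto. apply H; lia.
 - exists (S L). split; [lia|]. intros t' H'. destruct (Nat.eq_dec t' (S L)). subst; lra.
   assert (b t' <= b t) by (apply H; lia). lra. Qed.

Lemma argmin_fin (g : nat -> R) l : (0 < l)%nat -> exists s, (s < l)%nat /\ forall j, (j < l)%nat -> g s <= g j.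
Proof. intros Hl. destruct (argmax_fin (fun i => - g i) (l-1)) as [t [Ht H]].
 exists t. split; [lia|]. intros j Hj. specialize (H j ltac:(lia)). lra. Qed.

Lemma seq_tv (b : nat -> R) L W : b L = b 0%nat -> (forall t, (t <= L)%nat -> b 0%nat <= b t) ->
  (forall t t', (t <= L)%nat -> (t' <= L)%nat -> b t - b t' <= W) ->
  (forall t1 t2 t3, (t1 < t2)%nat -> (t2 < t3)%nat -> (t3 <= L)%nat -> b t1 <= b t2 \/ b t3 <= b t2) ->
  rsum (fun t => Rabs (b (S t) - b t)) L <= 2 * W.
Proof. intros HL Hmin HW Hnd. destruct (argmax_fin b L) as [m [Hm Hmax]].
 replace L with (m + (L - m))%nat at 1 by lia. rewrite rsum_split.
 rewrite (rsum_ext _ (fun t => b (S t) - b t)).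
 2:{ intros i Hi. rewrite Rabs_right; auto. apply Rle_ge.
     destruct (Nat.eq_dec (S i) m). subst. specialize (Hmax i ltac:(lia)). lra.
     destruct (Hnd i (S i) m ltac:(lia) ltac:(lia) ltac:(lia)). lra.
     specialize (Hmax i ltac:(lia)). lra. }
 rewrite rsum_telescope.
 rewrite (rsum_ext _ (fun t => - (b (m + S t)%nat - b (m + t)%nat))).
 2:{ intros i Hi. replace (m + S i)%nat with (S (m+i)) by lia. rewrite Rabs_left1; auto.
     destruct (Nat.eq_dec i 0). subst. rewrite Nat.add_0_r. specialize (Hmax (S m) ltac:(lia)). lra.
     destruct (Hnd m (m+i)%nat (S (m+i)) ltac:(lia) ltac:(lia) ltac:(lia)).
     specialize (Hmax (S (m+i)) ltac:(lia)). lra. lra. }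
 rewrite rsum_opp. rewrite (rsum_telescope (fun t => b (m + t)%nat)).
 rewrite Nat.add_0_r. replace (m + (L - m))%nat with L by lia.
 specialize (HW m 0%nat Hm ltac:(lia)). lra. Qed.

Lemma rsum_rot (g : nat -> R) l s : (s < l)%nat ->
  rsum g l = rsum (fun t => g ((s + t) mod l)%nat) l.
Proof. intros Hs.
 replace l with (s + (l - s))%nat at 1 by lia. rewrite rsum_split.
 replace l with ((l - s) + s)%nat at 2 by lia. rewrite rsum_split.
 rewrite (rsum_ext (fun i => g ((s + i) mod l)%nat) (fun i => g (s + i)%nat)).
 2:{ intros i Hi. f_equal. apply Nat.mod_small. lia. }
 rewrite (rsum_ext (fun i => g ((s + (l - s + i)) mod l)%nat) g).
 2:{ intros i Hi. f_equal. replace (s + (l - s + i))%nat with (i + 1 * l)%nat by lia.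
     rewrite Nat.mod_add by lia. apply Nat.mod_small. lia. }
 lra. Qed.

Section PolyU.
Variable v : nat -> V2.
Variable l : nat.
Hypothesis Hd : forall i j, (i < l)%nat -> (j < l)%nat -> v i = v j -> i = j.
Hypothesis He : forall i, (i < l)%nat ->
     ~ conv (fun p => exists j, (j < l)%nat /\ j <> i /\ p = v j) (v i).
Hypothesis Hc : forall i j, (i < l)%nat -> (j < l)%nat ->
      0 <= cross (vsub (v (S i mod l)) (v i)) (vsub (v j) (v i)).

Lemma mod_add' p a k : (0 < l)%nat -> ((p + a) mod l + k) mod l = (p + (a + k)) mod l.
Proof. intros. rewrite Nat.add_mod_idemp_l by lia. f_equal. lia. Qed.

Lemma nodip (d : V2) s t1 t2 t3 : (3 <= l)%nat -> (s < l)%nat ->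
  (forall j, (j < l)%nat -> cross d (v s) <= cross d (v j)) ->
  (0 < t1)%nat -> (t1 < t2)%nat -> (t2 < t3)%nat -> (t3 < l)%nat ->
  cross d (v ((s+t1) mod l)) <= cross d (v ((s+t2) mod l)) \/
  cross d (v ((s+t3) mod l)) <= cross d (v ((s+t2) mod l)).
Proof. intros Hl Hs Hmin H1 H12 H23 H3.
 pose proof (fan v l Hd He Hc s t1 t2 Hl Hs ltac:(lia) H12 ltac:(lia)) as O1.
 pose proof (fan v l Hd He Hc s t2 t3 Hl Hs ltac:(lia) H23 H3) as O2.
 pose proof (fan v l Hd He Hc ((s+t1) mod l) (t2-t1) (t3-t1) Hl (mod_lt l s t1 ltac:(lia)) ltac:(lia) ltac:(lia) ltac:(lia)) as O3.
 pose proof (fan v l Hd He Hc s t1 t3 Hl Hs ltac:(lia) ltac:(lia) H3) as O4.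
 unfold rr in *. rewrite !mod_add' in O3 by lia.
 replace (t1 + (t2 - t1))%nat with t2 in O3 by lia. replace (t1 + (t3 - t1))%nat with t3 in O3 by lia.
 pose proof (Hmin ((s+t1) mod l)%nat (mod_lt l s t1 ltac:(lia))) as M1.
 pose proof (Hmin ((s+t3) mod l)%nat (mod_lt l s t3 ltac:(lia))) as M3.

 revert O1 O2 O3 O4 M1 M3.
 generalize (v ((s + t1) mod l)%nat) (v ((s + t2) mod l)%nat) (v ((s + t3) mod l)%nat) (v s).
 intros [a1 a2] [x1 x2] [b1 b2] [s1 s2] O1 O2 O3 O4 M1 M3.
 destruct d as [d1 d2]. unfold cross, vsub in *; simpl in *.
 set (fa := d1 * a2 - d2 * a1 - (d1 * s2 - d2 * s1)) in *.
 set (fb := d1 * b2 - d2 * b1 - (d1 * s2 - d2 * s1)).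
 set (fx := d1 * x2 - d2 * x1 - (d1 * s2 - d2 * s1)).
 set (P1 := (a1 - s1) * (x2 - s2) - (a2 - s2) * (x1 - s1)) in *.
 set (P2 := (x1 - s1) * (b2 - s2) - (x2 - s2) * (b1 - s1)) in *.
 set (D := (a1 - s1) * (b2 - s2) - (a2 - s2) * (b1 - s1)) in *.
 assert (ID : D * fx = P2 * fa + P1 * fb) by (unfold D, fx, P2, fa, P1, fb; ring).
 assert (IO3 : P1 + P2 - D > 0) by (unfold P1, P2, D; nra).
 assert (fa >= 0) by (unfold fa; lra). assert (fb >= 0) by (unfold fb; lra).
 destruct (Rle_dec fa fb).
 - left. assert (Hf : fa <= fx).
   { destruct (Rle_dec fa fx); auto. exfalso.
     assert (D > 0) by lra.
     assert (P2 * fa + P1 * fb >= (P1 + P2) * fa) by nra. nra. }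
   unfold fa, fx in Hf. lra.
 - right. assert (Hf : fb <= fx).
   { destruct (Rle_dec fb fx); auto. exfalso.
     assert (D > 0) by lra.
     assert (P2 * fa + P1 * fb >= (P1 + P2) * fb) by nra. nra. }
   unfold fb, fx in Hf. lra. Qed.

Lemma lemmaU (d : V2) W : 0 <= W ->
  (forall i j, (i < l)%nat -> (j < l)%nat -> cross d (v i) - cross d (v j) <= W) ->
  rsum (fun i => Rabs (cross d (vsub (v (S i mod l)) (v i)))) l <= 2 * W.
Proof. intros HW0 HW.
 assert (Hl : (l = 0 \/ l = 1 \/ l = 2 \/ 3 <= l)%nat) by lia.
 destruct Hl as [El|[El|[El|Hl]]]; try rewrite El.
 - simpl. lra.
 - simpl. replace (S 0 mod 1)%nat with 0%nat by reflexivity.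
   assert (E : cross d (vsub (v 0%nat) (v 0%nat)) = 0) by (unfold cross, vsub; simpl; ring).
   rewrite E, Rabs_R0. lra.
 - simpl. replace (S 0 mod 2)%nat with 1%nat by reflexivity. replace (S 1 mod 2)%nat with 0%nat by reflexivity.
   assert (E: cross d (vsub (v 0%nat) (v 1%nat)) = - cross d (vsub (v 1%nat) (v 0%nat))) by (unfold cross, vsub; simpl; ring).
   rewrite E, Rabs_Ropp.
   assert (cross d (vsub (v 1%nat) (v 0%nat)) = cross d (v 1%nat) - cross d (v 0%nat)) by (unfold cross, vsub; simpl; ring).
   pose proof (HW 1%nat 0%nat ltac:(lia) ltac:(lia)). pose proof (HW 0%nat 1%nat ltac:(lia) ltac:(lia)).
   unfold Rabs; destruct Rcase_abs; lra.
 -    destruct (argmin_fin (fun j => cross d (v j)) l ltac:(lia)) as [s [Hs Hmin]].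
   rewrite (rsum_rot _ l s Hs).
   set (b := fun t => cross d (v ((s + t) mod l)%nat)).
   rewrite (rsum_ext _ (fun t => Rabs (b (S t) - b t))).
   2:{ intros i Hi. unfold b. rewrite (mod_S l s i) by lia. f_equal. unfold cross, vsub; simpl; ring. }
   apply seq_tv.
   + unfold b. f_equal. f_equal. rewrite Nat.add_0_r. replace (s + l)%nat with (s + 1 * l)%nat by lia.
     rewrite Nat.mod_add by lia. auto.
   + intros t Ht. unfold b. rewrite Nat.add_0_r, Nat.mod_small by lia. apply Hmin. apply mod_lt; lia.
   + intros t t' _ _. unfold b. apply HW; apply mod_lt; lia.
   + intros t1 t2 t3 H12 H23 H3. unfold b.
     destruct (Nat.eq_dec t1 0). { left. subst. rewrite Nat.add_0_r, Nat.mod_small by lia. apply Hmin. apply mod_lt; lia. }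
     destruct (Nat.eq_dec t3 l). { right. subst. replace (s + l)%nat with (s + 1 * l)%nat by lia.
        rewrite Nat.mod_add by lia. rewrite Nat.mod_small by lia. apply Hmin. apply mod_lt; lia. }
     apply nodip; auto; lia. Qed.
End PolyU.

Definition inH (a : V2) : Prop := snd a > 0 \/ (snd a = 0 /\ fst a > 0).
Definition sorted (a : nat -> V2) (n : nat) : Prop :=
  (forall b, (b < n)%nat -> inH (a b)) /\
  (forall b b', (b < b')%nat -> (b' < n)%nat -> cross (a b) (a b') > 0).

Lemma inH_nz a : inH a -> a <> v0.
Proof. unfold inH, v0. destruct a; simpl; intros [H|[H1 H2]] E; inversion E; lra. Qed.

Lemma inH_par a c : inH a -> inH c -> cross a c = 0 -> exists lam, lam > 0 /\ c = vscale lam a.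
Proof. intros Ha Hc H. destruct (cross_par a c H (inH_nz a Ha)) as [t Ht].
 exists t. split; auto. subst c. destruct a as [x y]; unfold inH, vscale in *; simpl in *.
 destruct (Rlt_dec 0 t) as [|n]; [lra|]. apply Rnot_lt_le in n. exfalso. destruct Ha as [Ha|[Ha1 Ha2]]; destruct Hc as [Hc|[Hc1 Hc2]].
 nra. assert (t = 0) by nra. subst. lra. subst. nra. subst. nra. Qed.

Lemma inH_trans a b c : inH a -> inH b -> inH c -> cross a b > 0 -> cross b c > 0 -> cross a c > 0.
Proof. destruct a as [a1 a2], b as [b1 b2], c as [c1 c2]; unfold inH, cross; simpl.
 intros Ha Hb Hc H1 H2. pose proof (plucker (a1,a2) (b1,b2) (c1,c2) (1,0)) as P. unfold cross in P; simpl in P.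
 destruct Hb as [Hb|[Hb1 Hb2]].
 - destruct Ha as [Ha|[Ha1 Ha2]]; destruct Hc as [Hc|[Hc1 Hc2]]; nra.
 - subst. nra. Qed.

Lemma inH_trans_w a b c : inH a -> inH b -> inH c -> cross a b > 0 -> cross b c >= 0 -> cross a c > 0.
Proof. intros Ha Hb Hc H1 H2. destruct (Rle_lt_or_eq_dec 0 (cross b c)) as [H|H]; [lra| |].
 - apply (inH_trans a b c); auto; lra.
 - destruct (inH_par b c Hb Hc (eq_sym H)) as [lam [Hl E]]. subst c.
   destruct a, b; unfold cross, vscale in *; simpl in *. nra. Qed.

Lemma inH_or (u : V2) : u <> v0 -> inH u \/ inH (vscale (-1) u).
Proof. destruct u as [x y]; unfold inH, vscale, v0; simpl; intros H.
 destruct (Rtotal_order y 0) as [|[|]]. right; left; lra. subst.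
 destruct (Rtotal_order x 0) as [|[|]]. right; right; split; lra. subst; exfalso; auto. left; right; auto.
 left; left; auto. Qed.

Lemma split_point (a : nat -> V2) n (u : V2) : sorted a n -> inH u ->
  (forall b, (b < n)%nat -> cross (a b) u <> 0) ->
  exists p, (p <= n)%nat /\ (forall b, (b < p)%nat -> cross (a b) u > 0) /\
     (forall b, (p <= b)%nat -> (b < n)%nat -> cross (a b) u < 0).
Proof. intros [HaH Has] Hu Hnp. induction n.
 - exists 0%nat. repeat split; intros; lia.
 - destruct IHn as [p [Hp [H1 H2]]].
   + intros; apply HaH; lia. + intros; apply Has; lia. + intros; apply Hnp; lia.
   + destruct (Nat.eq_dec p n).
     * subst. destruct (Rlt_dec 0 (cross (a n) u)).
       -- exists (S n). split; [lia|split]. intros b Hb. destruct (Nat.eq_dec b n). subst; lra. apply H1; lia. intros; lia.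
       -- exists n. split; [lia|split]; auto. intros b Hb1 Hb2. replace b with n by lia.
          assert (cross (a n) u <> 0) by (apply Hnp; lia). lra.
     * exists p. split; [lia|split]; auto. intros b Hb1 Hb2. destruct (Nat.eq_dec b n); [|apply H2; lia].
       subst. assert (cross (a p) u < 0) by (apply H2; lia).
       assert (cross (a p) (a n) > 0) by (apply Has; lia).
       assert (cross u (a n) > 0).
       { apply (inH_trans u (a p) (a n)); auto; try (apply HaH; lia).
         unfold cross in *; lra. }
       unfold cross in *; lra. Qed.

Definition ins (a : nat -> V2) p (u : V2) : nat -> V2 :=
  fun b => if Nat.ltb b p then a b else if Nat.eqb b p then u else a (b - 1)%nat.

Lemma sort_dirs K (u : nat -> V2) n0 (a0 : nat -> V2) : sorted a0 n0 ->
  exists n a (bet : nat -> nat) (lam : nat -> R),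
   sorted a n /\
   (forall b, (b < n0)%nat -> exists b', (b' < n)%nat /\ a b' = a0 b) /\
   (forall k, (k < K)%nat -> u k <> v0 -> (bet k < n)%nat /\ u k = vscale (lam k) (a (bet k))) /\
   (forall b, (b < n)%nat -> (exists b0, (b0 < n0)%nat /\ a b = a0 b0) \/
                            (exists k, (k < K)%nat /\ u k <> v0 /\ bet k = b)).
Proof. intros Hs0. induction K.
 - exists n0, a0, (fun _ => 0%nat), (fun _ => 0). repeat split; try apply Hs0.
   intros b Hb; exists b; auto. intros; lia. intros; lia. intros b Hb. left. exists b; auto.
 - destruct IHK as [n [a [bet [lam [Hs [H1 [H2 H3]]]]]]].
   destruct (classic (u K = v0)) as [Hz|Hnz].
   + exists n, a, bet, lam. split; [auto|split; [auto|split]].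
     intros k Hk Hu. destruct (Nat.eq_dec k K). subst; contradiction. apply H2; auto; lia.
     intros b Hb. destruct (H3 b Hb) as [?|[k [Hk Hk2]]]. left; auto. right; exists k; split; auto; lia.
   + assert (Hsig : exists sg u', inH u' /\ u K = vscale sg u' /\ (sg = 1 \/ sg = -1)).
     { destruct (inH_or _ Hnz). exists 1, (u K). split; auto. split; auto.
       destruct (u K); unfold vscale; simpl; f_equal; lra.
       exists (-1), (vscale (-1) (u K)). split; auto. split; auto.
       destruct (u K); unfold vscale; simpl; f_equal; lra. }
     destruct Hsig as [sg [u' [Hu' [Eu Hsg]]]].
     destruct (classic (exists b, (b < n)%nat /\ cross (a b) u' = 0)) as [[b [Hb Hpar]]|Hnpar].
     * destruct (inH_par (a b) u' (proj1 Hs b Hb) Hu' Hpar) as [mu [Hmu Emu]].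
       exists n, a, (fun k => if Nat.eqb k K then b else bet k), (fun k => if Nat.eqb k K then sg * mu else lam k).
       split; auto. split; auto. split.
       -- intros k Hk Hu. destruct (Nat.eqb_spec k K).
          ++ subst k. split; auto. rewrite Eu, Emu. destruct (a b); unfold vscale; simpl; f_equal; ring.
          ++ apply H2; auto; lia.
       -- intros b' Hb'. destruct (H3 b' Hb') as [?|[k [Hk [Hk2 Hk3]]]]. left; auto. right; exists k.
          split; [lia|]. split; auto. destruct (Nat.eqb_spec k K); [lia|auto].
     * assert (Hnp : forall b, (b < n)%nat -> cross (a b) u' <> 0) by (intros b Hb E; apply Hnpar; eauto).
       destruct (split_point a n u' Hs Hu' Hnp) as [p [Hp [Hlt Hgt]]].
       exists (S n), (ins a p u'), (fun k => if Nat.eqb k K then p else if Nat.ltb (bet k) p then bet k else S (bet k)),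
         (fun k => if Nat.eqb k K then sg else lam k).
       assert (Ins1 : forall b, (b < p)%nat -> ins a p u' b = a b).
       { intros b Hb. unfold ins. destruct (Nat.ltb_spec b p); lia || auto. }
       assert (Ins2 : ins a p u' p = u').
       { unfold ins. destruct (Nat.ltb_spec p p); try lia. rewrite Nat.eqb_refl. auto. }
       assert (Ins3 : forall b, (p < b)%nat -> ins a p u' b = a (b - 1)%nat).
       { intros b Hb. unfold ins. destruct (Nat.ltb_spec b p); try lia. destruct (Nat.eqb_spec b p); try lia. auto. }
       destruct Hs as [HsH Hso].
       split; [split|split; [|split]].
       -- intros b Hb. destruct (Nat.lt_total b p) as [?|[?|?]].
          rewrite Ins1; auto; apply HsH; lia. subst; rewrite Ins2; auto. rewrite Ins3; auto; apply HsH; lia.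
       -- intros b b' Hbb' Hb'.
          destruct (Nat.lt_total b p) as [?|[?|?]]; destruct (Nat.lt_total b' p) as [?|[?|?]]; try lia.
          ++ rewrite !Ins1; auto; apply Hso; lia.
          ++ subst. rewrite Ins1, Ins2; auto; apply Hlt; auto.
          ++ rewrite Ins1, Ins3; auto. apply Hso; lia.
          ++ subst. rewrite Ins2, Ins3; auto. assert (cross (a (b' - 1)%nat) u' < 0) by (apply Hgt; lia).
             unfold cross in *; lra.
          ++ rewrite !Ins3; auto. apply Hso; lia.
       -- intros b Hb. destruct (H1 b Hb) as [b' [Hb' E]].
          destruct (Nat.lt_ge_cases b' p). exists b'. split; [lia|]. rewrite Ins1; auto.
          exists (S b'). split; [lia|]. rewrite Ins3 by lia. replace (S b' - 1)%nat with b' by lia. auto.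
       -- intros k Hk Hu. destruct (Nat.eqb_spec k K).
             ** subst. split; [lia|]. rewrite Ins2. auto.
             ** destruct (H2 k ltac:(lia) Hu) as [Hbk Ek]. destruct (Nat.ltb_spec (bet k) p).
                split; [lia|]. rewrite Ins1; auto.
                split; [lia|]. rewrite Ins3 by lia. replace (S (bet k) - 1)%nat with (bet k) by lia. auto.
       -- intros b Hb. destruct (Nat.lt_total b p) as [?|[?|?]].
             ** destruct (H3 b ltac:(lia)) as [[b0 [Hb0 E]]|[k [Hk [Hk2 Hk3]]]].
                left. exists b0. split; auto. rewrite Ins1; auto.
                right. exists k. split; [lia|]. split; auto. destruct (Nat.eqb_spec k K); try lia.
                destruct (Nat.ltb_spec (bet k) p); lia.
             ** right. exists K. split; [lia|]. split; auto. rewrite Nat.eqb_refl; auto.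
             ** destruct (H3 (b-1)%nat ltac:(lia)) as [[b0 [Hb0 E]]|[k [Hk [Hk2 Hk3]]]].
                left. exists b0. split; auto. rewrite Ins3; auto.
                right. exists k. split; [lia|]. split; auto. destruct (Nat.eqb_spec k K); try lia.
                destruct (Nat.ltb_spec (bet k) p); lia. Qed.

Definition vopp (x : V2) : V2 := vscale (-1) x.

Lemma cross_opp_l a b : cross (vopp a) b = - cross a b.
Proof. destruct a, b; unfold cross, vopp, vscale; simpl; ring. Qed.
Lemma cross_opp_r a b : cross a (vopp b) = - cross a b.
Proof. destruct a, b; unfold cross, vopp, vscale; simpl; ring. Qed.
Lemma cross_anti a b : cross a b = - cross b a.
Proof. destruct a, b; unfold cross; simpl; ring. Qed.
Lemma cross_self a : cross a a = 0.
Proof. destruct a; unfold cross; simpl; ring. Qed.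
Lemma cross_scal_l t a b : cross (vscale t a) b = t * cross a b.
Proof. destruct a, b; unfold cross, vscale; simpl; ring. Qed.
Lemma cross_scal_r t a b : cross a (vscale t b) = t * cross a b.
Proof. destruct a, b; unfold cross, vscale; simpl; ring. Qed.
Lemma cross_sub_l a b c : cross (vsub a b) c = cross a c - cross b c.
Proof. destruct a, b, c; unfold cross, vsub; simpl; ring. Qed.
Lemma cross_sub_r a b c : cross c (vsub a b) = cross c a - cross c b.
Proof. destruct a, b, c; unfold cross, vsub; simpl; ring. Qed.
Lemma cross_add_r a b c : cross c (vadd a b) = cross c a + cross c b.
Proof. destruct a, b, c; unfold cross, vadd; simpl; ring. Qed.

Lemma split_point_w (c : nat -> V2) n x : sorted c n -> inH x -> exists m, (m <= n)%nat /\ (forall b, (b < m)%nat -> cross (c b) x >= 0) /\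
     (forall b, (m <= b)%nat -> (b < n)%nat -> cross (c b) x < 0).
Proof. intros [HsH Hso] Hx.
 induction n as [|n' IH].
 - exists 0%nat. repeat split; intros; lia.
 - destruct IH as [p [Hp [H1 H2]]].
   + intros; apply HsH; lia. + intros; apply Hso; lia.
   + destruct (Nat.eq_dec p n').
     * subst. destruct (Rle_dec 0 (cross (c n') x)) as [Hc|Hc].
       -- exists (S n'). split; [lia|split]. intros b Hb. destruct (Nat.eq_dec b n'). subst; lra. apply H1; lia. intros; lia.
       -- exists n'. split; [lia|split]; auto. intros b Hb1 Hb2. replace b with n' by lia. lra.
     * exists p. split; [lia|split]; auto. intros b Hb1 Hb2. destruct (Nat.eq_dec b n'); [|apply H2; lia].
       subst. assert (cross (c p) x < 0) by (apply H2; lia).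
       destruct (Rlt_dec (cross (c n') x) 0); auto. exfalso.
       assert (cross (c p) x > 0). { apply (inH_trans_w (c p) (c n') x); try apply HsH; try lia; auto.
          apply Hso; lia. lra. }
       lra. Qed.


Section MNorm.
Variable N : V2 -> R.
Hypothesis HN : seminorm N.
Variable c : nat -> V2.
Variable n : nat.
Hypothesis Hs : sorted c n.
Hypothesis Hn2 : (2 <= n)%nat.
Hypothesis Hnorm : forall b, (b < n)%nat -> N (c b) = 1.

Lemma cs_pos b j : (b < j)%nat -> (j < n)%nat -> cross (c b) (c j) > 0.
Proof. intros; apply Hs; auto. Qed.
Lemma cs_neg b j : (j < b)%nat -> (b < n)%nat -> cross (c b) (c j) < 0.
Proof. intros. rewrite cross_anti. assert (cross (c j) (c b) > 0) by (apply Hs; auto). lra. Qed.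

Definition ce (t : nat) : V2 :=
  if Nat.eqb t 0 then vopp (c (n-1)) else if Nat.leb t n then c (t-1) else vopp (c 0).

Lemma ce_0 : ce 0 = vopp (c (n-1)). Proof. reflexivity. Qed.
Lemma ce_mid t : (1 <= t)%nat -> (t <= n)%nat -> ce t = c (t-1).
Proof. intros. unfold ce. destruct (Nat.eqb_spec t 0); try lia. destruct (Nat.leb_spec t n); try lia. auto. Qed.
Lemma ce_last : ce (S n) = vopp (c 0).
Proof. unfold ce. destruct (Nat.eqb_spec (S n) 0); try lia. destruct (Nat.leb_spec (S n) n); try lia. auto. Qed.

Lemma N_opp x : N (vopp x) = N x.
Proof. unfold vopp. apply sn_opp; auto. Qed.

Lemma ce_norm t : (t <= S n)%nat -> N (ce t) = 1.
Proof. intros. destruct (Nat.eq_dec t 0). subst. rewrite ce_0, N_opp. apply Hnorm; lia.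
 destruct (Nat.eq_dec t (S n)). subst. rewrite ce_last, N_opp. apply Hnorm; lia.
 rewrite ce_mid by lia. apply Hnorm; lia. Qed.

Definition kap t := cross (ce t) (ce (S t)).

Lemma kap_pos t : (t <= n)%nat -> kap t > 0.
Proof. intros Ht. unfold kap. destruct (Nat.eq_dec t 0).
 - subst. rewrite ce_0, ce_mid by lia. rewrite cross_opp_l. simpl.
   assert (cross (c (n-1)) (c 0) < 0) by (apply cs_neg; lia). lra.
 - destruct (Nat.eq_dec t n).
   + subst. rewrite ce_last, ce_mid by lia. rewrite cross_opp_r.
     assert (cross (c (n-1)) (c 0) < 0) by (apply cs_neg; lia). lra.
   + rewrite !ce_mid by lia. apply cs_pos; lia. Qed.

Definition Dd t := vscale (/ kap t) (vsub (ce t) (ce (S t))).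

Lemma Dd_next t : (t <= n)%nat -> cross (Dd t) (ce (S t)) = 1.
Proof. intros Ht. unfold Dd. rewrite cross_scal_l, cross_sub_l, cross_self.
 pose proof (kap_pos t Ht). unfold kap in *. field. lra. Qed.
Lemma Dd_cur t : (t <= n)%nat -> cross (Dd t) (ce t) = 1.
Proof. intros Ht. unfold Dd. rewrite cross_scal_l, cross_sub_l, cross_self.
 pose proof (kap_pos t Ht). unfold kap in *. rewrite (cross_anti (ce (S t))). field. lra. Qed.

Lemma kap_0n : kap 0 = kap n.
Proof. unfold kap. rewrite ce_0, ce_last. rewrite (ce_mid 1) by lia. rewrite (ce_mid n) by lia.
 replace (1-1)%nat with 0%nat by lia. rewrite cross_opp_l, cross_opp_r. ring. Qed.

Lemma Dd_0n : Dd 0 = vopp (Dd n).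
Proof. unfold Dd. rewrite kap_0n. rewrite ce_0, ce_last. rewrite (ce_mid 1) by lia. rewrite (ce_mid n) by lia.
 replace (1-1)%nat with 0%nat by lia.
 destruct (c (n-1)) as [x y], (c 0) as [z w]. unfold vopp, vscale, vsub; simpl. f_equal; ring. Qed.

Lemma cs_ge b j : (b <= j)%nat -> (j < n)%nat -> cross (c b) (c j) >= 0.
Proof. intros. destruct (Nat.eq_dec b j). subst; rewrite cross_self; lra. left; apply cs_pos; lia. Qed.
Lemma cs_le b j : (j <= b)%nat -> (b < n)%nat -> cross (c b) (c j) <= 0.
Proof. intros. destruct (Nat.eq_dec b j). subst; rewrite cross_self; lra. left; apply cs_neg; lia. Qed.

Definition G b := vsub (Dd (S b)) (Dd b).

Lemma G_par b : (b < n)%nat -> cross (c b) (G b) = 0.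
Proof. intros Hb. unfold G. rewrite cross_sub_r. rewrite (cross_anti _ (Dd (S b))), (cross_anti _ (Dd b)).
 replace (c b) with (ce (S b)) by (rewrite ce_mid by lia; f_equal; lia).
 rewrite Dd_cur by lia. rewrite Dd_next by lia. ring. Qed.

Lemma G_pos b : (b < n)%nat -> cross (G b) (ce (S (S b))) >= 0.
Proof. intros Hb. unfold G. rewrite cross_sub_l. rewrite Dd_next by lia.
 unfold Dd. rewrite cross_scal_l, cross_sub_l.
 pose proof (kap_pos b ltac:(lia)) as K0. pose proof (kap_pos (S b) ltac:(lia)) as K1. unfold kap in *.
 set (p := ce b) in *. set (q := ce (S b)) in *. set (r := ce (S (S b))) in *.
 assert (Np : N p = 1) by (apply ce_norm; lia). assert (Nq : N q = 1) by (apply ce_norm; lia).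
 assert (Nr : N r = 1) by (apply ce_norm; lia).
 assert (Hconv : cross p r <= cross q r + cross p q).
 { destruct (Rle_dec (cross p r) 0) as [|Hpr]; [lra|apply Rnot_le_lt in Hpr].
   assert (E : vscale (cross p r) q = vadd (vscale (cross q r) p) (vscale (cross p q) r)).
   { destruct p, q, r; unfold vscale, vadd, cross; simpl; f_equal; ring. }
   assert (HH : N (vscale (cross p r) q) <= cross q r + cross p q).
   { rewrite E. eapply Rle_trans. apply sn_tri; auto. rewrite !sn_hom by auto.
     rewrite Np, Nr, !Rabs_right by (auto || lra). lra. }
   rewrite sn_hom, Nq, Rabs_right in HH by (auto || lra). lra. }
 assert (cross p r - cross q r <= cross p q) by lra.
 assert (/ cross p q * (cross p r - cross q r) <= 1).
 { apply (Rmult_le_reg_l (cross p q)); auto. field_simplify; lra. }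
 lra. Qed.

Lemma c_nz b : (b < n)%nat -> c b <> v0.
Proof. intros. apply inH_nz. apply Hs; auto. Qed.

Lemma G_gamma b : (b < n)%nat -> exists g, g >= 0 /\ G b = vscale g (c b).
Proof. intros Hb. destruct (cross_par (c b) (G b) (G_par b Hb) (c_nz b Hb)) as [g Hg].
 exists g. split; auto. pose proof (G_pos b Hb) as P. rewrite Hg, cross_scal_l in P.
 pose proof (kap_pos (S b) ltac:(lia)) as K. unfold kap in K.
 replace (ce (S b)) with (c b) in K by (rewrite ce_mid by lia; f_equal; lia).
 destruct (Rle_dec 0 g) as [|Hg0]; [lra|apply Rnot_le_lt in Hg0]. nra. Qed.

Definition M x := / 2 * rsum (fun b => Rabs (cross (G b) x)) n.

Lemma M_scal t x : M (vscale t x) = Rabs t * M x.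
Proof. unfold M. rewrite (rsum_ext _ (fun b => Rabs t * Rabs (cross (G b) x))).
 rewrite rsum_scal. ring. intros. rewrite cross_scal_r, Rabs_mult. auto. Qed.

Lemma M_opp x : M (vopp x) = M x.
Proof. unfold vopp. rewrite M_scal, Rabs_m1'. ring. Qed.

Lemma M_ck k : (k < n)%nat -> M (c k) = 1.
Proof. intros Hk. unfold M.
 rewrite (rsum_ext _ (fun b => (if Nat.leb b k then 1 else -1) *
            (cross (Dd (S b)) (c k) - cross (Dd b) (c k)))).
 2:{ intros b Hb. destruct (G_gamma b Hb) as [g [Hg E]].
     replace (cross (Dd (S b)) (c k) - cross (Dd b) (c k)) with (cross (G b) (c k)) by (unfold G; rewrite cross_sub_l; auto).
     rewrite E, cross_scal_l. destruct (Nat.leb_spec b k).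
     - pose proof (cs_ge b k H Hk). rewrite Rabs_right by nra. ring.
     - pose proof (cs_le b k ltac:(lia) Hb). rewrite Rabs_left1 by nra. ring. }
 replace n with (S k + (n - S k))%nat at 1 by lia. rewrite rsum_split.
 rewrite (rsum_ext (fun b => _ * _) (fun b => cross (Dd (S b)) (c k) - cross (Dd b) (c k))).
 2:{ intros b Hb. destruct (Nat.leb_spec b k); try lia. ring. }
 rewrite (rsum_telescope (fun t => cross (Dd t) (c k))).
 rewrite (rsum_ext _ (fun i => - ((fun t => cross (Dd (S k + t)%nat) (c k)) (S i) - (fun t => cross (Dd (S k + t)%nat) (c k)) i))).
 2:{ intros i Hi. destruct (Nat.leb_spec (S k + i) k); try lia. simpl. replace (k + S i)%nat with (S (k+i)) by lia. ring. }
 rewrite rsum_opp, (rsum_telescope (fun t => cross (Dd (S k + t)%nat) (c k))). simpl. replace (S (k + (n - S k)))%nat with n by lia.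
 rewrite Nat.add_0_r. rewrite Dd_0n. rewrite cross_opp_l.
 replace (c k) with (ce (S k)) by (rewrite ce_mid by lia; f_equal; lia).
 rewrite Dd_cur by lia. field. Qed.

Lemma M_nonneg x : 0 <= M x.
Proof. unfold M. apply Rmult_le_pos. lra. apply rsum_nonneg. intros; apply Rabs_pos. Qed.

Lemma cone_exists x : inH x -> exists t, (t <= n)%nat /\ cross (ce t) x >= 0 /\ cross x (ce (S t)) >= 0.
Proof. intros Hx. destruct (split_point_w c n x Hs Hx) as [m [Hm [H1 H2]]]. exists m. split; auto.
 destruct (Nat.eq_dec m 0).
 - subst. rewrite ce_0, cross_opp_l. replace (S 0) with 1%nat by lia. rewrite ce_mid by lia.
   replace (1-1)%nat with 0%nat by lia. rewrite (cross_anti x).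
   assert (cross (c (n-1)) x < 0) by (apply H2; lia). assert (cross (c 0) x < 0) by (apply H2; lia). lra.
 - rewrite ce_mid by lia. split. apply H1; lia.
   destruct (Nat.eq_dec m n).
   + subst. rewrite ce_last, cross_opp_r, (cross_anti x). assert (cross (c 0) x >= 0) by (apply H1; lia). lra.
   + rewrite ce_mid by lia. replace (S m - 1)%nat with m by lia. rewrite (cross_anti x).
     assert (cross (c m) x < 0) by (apply H2; lia). lra. Qed.

Lemma ce_sign t b : (t <= n)%nat -> (b < n)%nat -> cross (c b) (ce t) * cross (c b) (ce (S t)) >= 0.
Proof. intros Ht Hb. destruct (Nat.eq_dec t 0).
 - subst. rewrite ce_0, cross_opp_r. replace (S 0) with 1%nat by lia. rewrite ce_mid by lia.
   replace (1-1)%nat with 0%nat by lia. pose proof (cs_ge b (n-1) ltac:(lia) ltac:(lia)).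
   pose proof (cs_le b 0 ltac:(lia) Hb). nra.
 - destruct (Nat.eq_dec t n).
   + subst. rewrite ce_last, cross_opp_r, ce_mid by lia.
     pose proof (cs_ge b (n-1) ltac:(lia) ltac:(lia)). pose proof (cs_le b 0 ltac:(lia) Hb). nra.
   + rewrite !ce_mid by lia. replace (S t - 1)%nat with t by lia.
     destruct (Nat.le_gt_cases b (t-1)).
     * pose proof (cs_ge b (t-1) ltac:(lia) ltac:(lia)). pose proof (cs_ge b t ltac:(lia) ltac:(lia)). nra.
     * pose proof (cs_le b (t-1) ltac:(lia) ltac:(lia)). pose proof (cs_le b t ltac:(lia) ltac:(lia)). nra. Qed.

Lemma M_ce t : (t <= S n)%nat -> M (ce t) = 1.
Proof. intros. destruct (Nat.eq_dec t 0). subst. rewrite ce_0, M_opp. apply M_ck; lia.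
 destruct (Nat.eq_dec t (S n)). subst. rewrite ce_last, M_opp. apply M_ck; lia.
 rewrite ce_mid by lia. apply M_ck; lia. Qed.

Lemma abs_comb a b u v : 0 <= a -> 0 <= b -> u * v >= 0 -> Rabs (a * u + b * v) = a * Rabs u + b * Rabs v.
Proof. intros. destruct (Rle_dec 0 u); destruct (Rle_dec 0 v).
 - rewrite !Rabs_right; nra.
 - assert (u = 0 \/ u > 0) by lra. destruct H2. subst. rewrite Rabs_R0, Rabs_left1 by nra. rewrite Rabs_left1 by nra. ring. nra.
 - assert (v = 0 \/ v > 0) by lra. destruct H2. subst. rewrite Rabs_R0, Rabs_left1 by nra. rewrite Rabs_left1 by nra. ring. nra.
 - rewrite !Rabs_left1; nra. Qed.

Lemma M_cone t a b : (t <= n)%nat -> 0 <= a -> 0 <= b ->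
  M (vadd (vscale a (ce t)) (vscale b (ce (S t)))) = a + b.
Proof. intros Ht Ha Hb. transitivity (a * M (ce t) + b * M (ce (S t))).
 2:{ rewrite !M_ce by lia. ring. }
 unfold M. rewrite (rsum_ext _ (fun i => a * Rabs (cross (G i) (ce t)) + b * Rabs (cross (G i) (ce (S t))))).
 rewrite rsum_plus, !rsum_scal. ring.
 intros i Hi. rewrite cross_add_r, !cross_scal_r. apply abs_comb; auto.
 destruct (G_gamma i Hi) as [g [Hg E]]. rewrite E, !cross_scal_l.
 pose proof (ce_sign t i Ht Hi). assert (0 <= g * g) by nra. nra. Qed.

Lemma M_ge x : N x <= M x.
Proof. assert (Hcase : forall y, inH y -> N y <= M y).
 { intros y Hy. destruct (cone_exists y Hy) as [t [Ht [H1 H2]]].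
   pose proof (kap_pos t Ht) as K. unfold kap in K.
   set (D := cross (ce t) (ce (S t))) in *.
   assert (E : y = vadd (vscale (cross y (ce (S t)) / D) (ce t)) (vscale (cross (ce t) y / D) (ce (S t)))).
   { unfold D in *. destruct y, (ce t), (ce (S t)). unfold vadd, vscale, cross in *; simpl in *. f_equal; field; lra. }
   rewrite E at 2. rewrite M_cone; auto.
   2,3: unfold Rdiv; apply Rmult_le_pos; try lra; left; apply Rinv_0_lt_compat; lra.
   rewrite E at 1. eapply Rle_trans. apply sn_tri; auto. rewrite !sn_hom by auto.
   rewrite !ce_norm by lia. rewrite !Rabs_right. lra.
   all: unfold Rdiv; apply Rle_ge; apply Rmult_le_pos; try lra; left; apply Rinv_0_lt_compat; lra. }
 destruct (classic (x = v0)) as [Hz|Hz].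
 - subst. rewrite sn_zero by auto. apply M_nonneg.
 - destruct (inH_or x Hz). auto. pose proof (Hcase _ H). rewrite sn_opp in H0 by auto.
   fold (vopp x) in H0. rewrite M_opp in H0. auto. Qed.

End MNorm.

Definition inZ (z0 : V2) (U : nat -> V2) (K : nat) (p : V2) : Prop :=
  exists t : nat -> R, (forall k, (k < K)%nat -> 0 <= t k <= 1) /\
    p = vadd z0 (vsum (fun k => vscale (t k) (U k)) K).

Lemma inZ_width d z0 U K p q : inZ z0 U K p -> inZ z0 U K q ->
  cross d p - cross d q <= rsum (fun k => Rabs (cross d (U k))) K.
Proof. intros [t [Ht Ep]] [s [Hs Eq]]. subst p q. rewrite !cross_add_r, !cross_vsum_r.
 replace (cross d z0 + rsum (fun i => cross d (vscale (t i) (U i))) K -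
   (cross d z0 + rsum (fun i => cross d (vscale (s i) (U i))) K)) with
   (rsum (fun i => (t i - s i) * cross d (U i)) K).
 2:{ rewrite (rsum_ext _ (fun i => t i * cross d (U i) + (- (s i * cross d (U i))))).
     rewrite rsum_plus, rsum_opp. rewrite (rsum_ext (fun i => cross d (vscale (t i) (U i))) (fun i => t i * cross d (U i))).
     rewrite (rsum_ext (fun i => cross d (vscale (s i) (U i))) (fun i => s i * cross d (U i))). ring.
     intros; apply cross_scal_r. intros; apply cross_scal_r. intros; ring. }
 apply rsum_le. intros i Hi. specialize (Ht i Hi). specialize (Hs i Hi).
 unfold Rabs; destruct Rcase_abs; nra. Qed.

Definition a0dirs (b : nat) : V2 := if Nat.eqb b 0 then (1,0) else (0,1).

Lemma a0_sorted : sorted a0dirs 2.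
Proof. split. intros b Hb. destruct b as [|[|]]; unfold a0dirs, inH; simpl; lra || lia.
 intros b b' H1 H2. destruct b as [|[|]]; destruct b' as [|[|]]; try lia. unfold a0dirs, cross; simpl; lra. Qed.

Lemma sorted_scale (a : nat -> V2) n (f : nat -> R) : sorted a n -> (forall b, (b < n)%nat -> f b > 0) ->
  sorted (fun b => vscale (f b) (a b)) n.
Proof. intros [H1 H2] Hf. split.
 - intros b Hb. specialize (H1 b Hb). specialize (Hf b Hb). destruct (a b); unfold inH, vscale in *; simpl in *.
   destruct H1 as [|[]]; [left; nra|right; split; nra].
 - intros b b' Hb Hb'. rewrite cross_scal_l, cross_scal_r. specialize (H2 b b' Hb Hb').
   assert (f b > 0) by (apply Hf; lia). assert (f b' > 0) by (apply Hf; lia).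
   apply Rlt_gt. apply Rmult_lt_0_compat; auto. apply Rmult_lt_0_compat; auto. Qed.

Lemma vscale_vscale s t x : vscale s (vscale t x) = vscale (s * t) x.
Proof. destruct x; unfold vscale; simpl; f_equal; ring. Qed.

Section CoreA.
Variable N : V2 -> R.
Hypothesis HN : seminorm N.
Hypothesis Hpos : forall x, x <> v0 -> 0 < N x.
Variable v : nat -> V2.
Variable l : nat.
Hypothesis Hd : forall i j, (i < l)%nat -> (j < l)%nat -> v i = v j -> i = j.
Hypothesis He : forall i, (i < l)%nat ->
     ~ conv (fun p => exists j, (j < l)%nat /\ j <> i /\ p = v j) (v i).
Hypothesis Hc : forall i j, (i < l)%nat -> (j < l)%nat ->
      0 <= cross (vsub (v (S i mod l)) (v i)) (vsub (v j) (v i)).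
Variable K : nat.
Variable U : nat -> V2.
Variable z0 : V2.
Hypothesis Hv : forall i, (i < l)%nat -> inZ z0 U K (v i).

Lemma coreA_norm : polygon_perimeter N v l <= 2 * rsum (fun k => N (U k)) K.
Proof.
 destruct (sort_dirs K U 2 a0dirs a0_sorted) as [n [a [bet [lam [Hs [H1 [H2 H3]]]]]]].
 assert (Hn2 : (2 <= n)%nat).
 { destruct (H1 0%nat ltac:(lia)) as [b0 [Hb0 E0]]. destruct (H1 1%nat ltac:(lia)) as [b1 [Hb1 E1]].
   assert (b0 <> b1). { intro; subst. rewrite E0 in E1. unfold a0dirs in E1. simpl in E1. inversion E1. lra. }
   lia. }
 assert (Hapos : forall b, (b < n)%nat -> N (a b) > 0).
 { intros b Hb. apply Hpos. apply inH_nz. apply Hs; auto. }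
 set (c := fun b => vscale (/ N (a b)) (a b)).
 assert (Hcs : sorted c n).
 { apply sorted_scale; auto. intros b Hb. apply Rlt_gt, Rinv_0_lt_compat. apply Hapos; auto. }
 assert (Hcn : forall b, (b < n)%nat -> N (c b) = 1).
 { intros b Hb. unfold c. rewrite sn_hom by auto. rewrite Rabs_right.
   field. specialize (Hapos b Hb). lra. left. apply Rinv_0_lt_compat. apply Hapos; auto. }
 set (MM := M c n).
 assert (HMU : forall k, (k < K)%nat -> MM (U k) = N (U k)).
 { intros k Hk. destruct (classic (U k = v0)) as [Hz|Hz].
   - rewrite Hz. replace v0 with (vscale 0 v0) by (unfold vscale, v0; simpl; f_equal; ring).
     unfold MM. rewrite M_scal, sn_hom by auto. rewrite Rabs_R0. ring.
   - destruct (H2 k Hk Hz) as [Hb E]. rewrite E.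
     replace (a (bet k)) with (vscale (N (a (bet k))) (c (bet k))).
     2:{ unfold c. specialize (Hapos _ Hb). destruct (a (bet k)); unfold vscale; simpl; f_equal; field; lra. }
     rewrite vscale_vscale. unfold MM. rewrite M_scal, sn_hom by auto. rewrite (M_ck N HN c n Hcs Hn2 Hcn), Hcn; auto. }
 unfold polygon_perimeter.
 eapply Rle_trans. apply (rsum_le _ (fun i => MM (vsub (v (S i mod l)) (v i)))).
 intros i Hi. apply (M_ge N HN c n Hcs Hn2 Hcn).
 unfold MM, M. rewrite rsum_scal.
 rewrite (rsum_exchange (fun i b => Rabs (cross (G c n b) (vsub (v (S i mod l)) (v i))))).
 eapply Rle_trans. apply Rmult_le_compat_l. lra.
 apply (rsum_le _ (fun b => 2 * rsum (fun k => Rabs (cross (G c n b) (U k))) K)).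
 intros b Hb. apply lemmaU; auto. apply rsum_nonneg; intros; apply Rabs_pos.
 intros i j Hi Hj. apply (inZ_width _ z0 U K); auto.
 rewrite rsum_scal. rewrite (rsum_exchange (fun b k => Rabs (cross (G c n b) (U k)))).
 replace (/ 2 * (2 * rsum (fun j => rsum (fun i => Rabs (cross (G c n i) (U j))) n) K))
   with (rsum (fun j => rsum (fun i => Rabs (cross (G c n i) (U j))) n) K) by field.
 rewrite <- rsum_scal. apply rsum_le. intros k Hk. rewrite <- (HMU k Hk). unfold MM, M. lra.
Qed.
End CoreA.

Lemma eps_le a b C : 0 <= C -> (forall e, e > 0 -> a <= b + e * C) -> a <= b.
Proof. intros HC H. destruct (Rle_dec a b) as [|Hn]; auto. apply Rnot_le_lt in Hn.
 set (e := (a - b) / (C + 1)). assert (e > 0) by (unfold e; apply Rdiv_lt_0_compat; lra).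
 specialize (H e H0). assert (e * C < a - b).
 { unfold e. apply (Rmult_lt_reg_r (C+1)). lra. unfold Rdiv. replace ((a - b) * / (C + 1) * C * (C + 1)) with ((a-b) * C * ((C+1) * / (C+1))) by ring. rewrite Rinv_r by lra. nra. }
 lra. Qed.

Definition Neps (N : V2 -> R) (e : R) (x : V2) := N x + e * (Rabs (fst x) + Rabs (snd x)).

Lemma Neps_semi N e : seminorm N -> 0 <= e -> seminorm (Neps N e).
Proof. intros HN He. split.
 - intros a b. unfold Neps. pose proof (sn_tri N HN a b). destruct a, b; unfold vadd; simpl in *.
   pose proof (Rabs_triang r r1). pose proof (Rabs_triang r0 r2). unfold vadd in *; simpl in *.
   assert (e * Rabs (r + r1) <= e * (Rabs r + Rabs r1)) by (apply Rmult_le_compat_l; lra).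
   assert (e * Rabs (r0 + r2) <= e * (Rabs r0 + Rabs r2)) by (apply Rmult_le_compat_l; lra). lra.
 - intros t a. unfold Neps. rewrite sn_hom by auto. destruct a; unfold vscale; simpl. rewrite !Rabs_mult. ring. Qed.

Lemma Neps_pos N e : seminorm N -> e > 0 -> forall x, x <> v0 -> 0 < Neps N e x.
Proof. intros HN He x Hx. unfold Neps. pose proof (sn_nonneg N HN x).
 destruct x as [p q]. simpl. assert (p <> 0 \/ q <> 0) by (destruct (Req_dec p 0); destruct (Req_dec q 0); subst; auto; exfalso; apply Hx; reflexivity).
 destruct H0. pose proof (Rabs_pos_lt p H0). pose proof (Rabs_pos q). nra.
 pose proof (Rabs_pos_lt q H0). pose proof (Rabs_pos p). nra. Qed.

Lemma coreA_ccw N (HN : seminorm N) v l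
  (Hd : forall i j, (i < l)%nat -> (j < l)%nat -> v i = v j -> i = j)
  (He : forall i, (i < l)%nat -> ~ conv (fun p => exists j, (j < l)%nat /\ j <> i /\ p = v j) (v i))
  (Hc : forall i j, (i < l)%nat -> (j < l)%nat -> 0 <= cross (vsub (v (S i mod l)) (v i)) (vsub (v j) (v i)))
  K U z0 (Hv : forall i, (i < l)%nat -> inZ z0 U K (v i)) :
  polygon_perimeter N v l <= 2 * rsum (fun k => N (U k)) K.
Proof. apply (eps_le _ _ (2 * rsum (fun k => Rabs (fst (U k)) + Rabs (snd (U k))) K)).
 - apply Rmult_le_pos; [lra|]. apply rsum_nonneg. intros. pose proof (Rabs_pos (fst (U i))); pose proof (Rabs_pos (snd (U i))); lra.
 - intros e He0. pose proof (coreA_norm (Neps N e) (Neps_semi N e HN ltac:(lra)) (Neps_pos N e HN He0) v l Hd He Hc K U z0 Hv) as H.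
   eapply Rle_trans. 2: eapply Rle_trans. 2: exact H.
   + unfold polygon_perimeter. apply rsum_le. intros. unfold Neps.
     pose proof (Rabs_pos (fst (vsub (v (S i mod l)) (v i)))). pose proof (Rabs_pos (snd (vsub (v (S i mod l)) (v i)))). nra.
   + unfold Neps. rewrite rsum_plus, rsum_scal. lra. Qed.

Definition rho (x : V2) : V2 := (fst x, - snd x).
Lemma rho_rho x : rho (rho x) = x. Proof. destruct x; unfold rho; simpl; f_equal; ring. Qed.
Lemma rho_sub a b : rho (vsub a b) = vsub (rho a) (rho b). Proof. destruct a, b; unfold rho, vsub; simpl; f_equal; ring. Qed.
Lemma rho_add a b : rho (vadd a b) = vadd (rho a) (rho b). Proof. destruct a, b; unfold rho, vadd; simpl; f_equal; ring. Qed.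
Lemma rho_scal t a : rho (vscale t a) = vscale t (rho a). Proof. destruct a; unfold rho, vscale; simpl; f_equal; ring. Qed.
Lemma rho_vsum f m : rho (vsum f m) = vsum (fun i => rho (f i)) m.
Proof. induction m; simpl. unfold rho, v0; simpl; f_equal; ring. rewrite rho_add, IHm; auto. Qed.
Lemma rho_cross a b : cross (rho a) (rho b) = - cross a b. Proof. destruct a, b; unfold rho, cross; simpl; ring. Qed.

Lemma conv_mono (S T : V2 -> Prop) p : (forall q, S q -> T q) -> conv S p -> conv T p.
Proof. intros H [n [w [q [H1 [H2 H3]]]]]. exists n, w, q. split; auto. intros i Hi. destruct (H1 i Hi); auto. Qed.

Lemma conv_rho S p : conv S p -> conv (fun q => exists r, S r /\ q = rho r) (rho p).
Proof. intros [n [w [q [H1 [H2 H3]]]]]. exists n, w, (fun i => rho (q i)). split; [|split]; auto.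
 intros i Hi. destruct (H1 i Hi). split; eauto. subst. rewrite rho_vsum. apply vsum_ext. intros. apply rho_scal. Qed.

Lemma coreA_poly N (HN : seminorm N) v l (Hp : polygon_vertices v l) K U z0
  (Hv : forall i, (i < l)%nat -> inZ z0 U K (v i)) :
  polygon_perimeter N v l <= 2 * rsum (fun k => N (U k)) K.
Proof. destruct Hp as [Hd [He [Hc|Hc]]].
 - eapply coreA_ccw; eauto.
 - set (N' := fun x => N (rho x)).
   assert (HN' : seminorm N').
   { split. intros a b. unfold N'. rewrite rho_add. apply HN. intros t a. unfold N'. rewrite rho_scal. apply HN. }
   pose proof (coreA_ccw N' HN' (fun i => rho (v i)) l) as H.
   assert (E1 : polygon_perimeter N' (fun i => rho (v i)) l = polygon_perimeter N v l).
   { unfold polygon_perimeter, N'. apply rsum_ext. intros. rewrite <- rho_sub, rho_rho. auto. }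
   assert (E2 : rsum (fun k => N' (rho (U k))) K = rsum (fun k => N (U k)) K).
   { apply rsum_ext. intros. unfold N'. rewrite rho_rho. auto. }
   rewrite <- E1, <- E2. apply (H) with (z0 := rho z0).
   + intros i j Hi Hj E. apply Hd; auto. rewrite <- (rho_rho (v i)), <- (rho_rho (v j)). simpl in E. rewrite E. auto.
   + intros i Hi Hconv. apply (He i Hi). apply conv_rho in Hconv. rewrite rho_rho in Hconv.
     eapply conv_mono; [|exact Hconv]. intros q [r [[j [Hj [Hji Er]]] Eq]]. subst. exists j. split; auto. split; auto. apply rho_rho.
   + intros i j Hi Hj. rewrite <- !rho_sub, rho_cross. specialize (Hc i j Hi Hj). lra.
   + intros i Hi. destruct (Hv i Hi) as [t [Ht E]]. exists t. split; auto. rewrite E, rho_add, rho_vsum.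
     f_equal. apply vsum_ext. intros. apply rho_scal. Qed.

Lemma rsum_pos_w (w F : nat -> R) n : (forall k, (k < n)%nat -> 0 <= w k) -> (forall k, (k < n)%nat -> F k > 0) ->
  rsum w n > 0 -> rsum (fun k => w k * F k) n > 0.
Proof. induction n; simpl; intros Hw HF H. lra.
 assert (0 <= w n) by (apply Hw; lia). assert (F n > 0) by (apply HF; lia).
 assert (0 <= rsum (fun k => w k * F k) n).
 { apply rsum_nonneg. intros. assert (0 <= w i) by (apply Hw; lia). assert (F i > 0) by (apply HF; lia). nra. }
 destruct (Rlt_dec 0 (w n)). nra.
 assert (rsum (fun k => w k * F k) n > 0). { apply IHn; try (intros; apply Hw || apply HF; lia). lra. }
 nra. Qed.

Lemma conv_affine_pos (S : V2 -> Prop) (e : V2) (c0 : R) p :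
  (forall q, S q -> cross e q + c0 > 0) -> conv S p -> cross e p + c0 > 0.
Proof. intros H [n [w [q [H1 [H2 H3]]]]]. subst p.
 rewrite cross_vsum_r.
 replace (rsum (fun i => cross e (vscale (w i) (q i))) n + c0) with (rsum (fun k => w k * (cross e (q k) + c0)) n).
 2:{ rewrite (rsum_ext _ (fun k => w k * cross e (q k) + c0 * w k)) by (intros; ring).
     rewrite rsum_plus, rsum_scal, H2. f_equal. apply rsum_ext. intros; rewrite cross_scal_r; auto. ring. }
 apply rsum_pos_w. intros k Hk; apply H1; auto. intros k Hk; apply H; apply H1; auto. lra. Qed.

Lemma pick3 a b : exists k, (k < 3)%nat /\ k <> a /\ k <> b.
Proof. destruct (Nat.eq_dec a 0); destruct (Nat.eq_dec b 0); destruct (Nat.eq_dec a 1); destruct (Nat.eq_dec b 1);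
 try (exists 2%nat; lia); try (exists 1%nat; lia); try (exists 0%nat; lia). Qed.

Lemma pv_strict (v : nat -> V2) l : (3 <= l)%nat ->
  (forall i j, (i < l)%nat -> (j < l)%nat -> j <> i -> j <> (S i mod l)%nat ->
     cross (vsub (v (S i mod l)) (v i)) (vsub (v j) (v i)) > 0) ->
  polygon_vertices v l.
Proof. intros Hl H.
 assert (Hc : forall i j, (i < l)%nat -> (j < l)%nat -> 0 <= cross (vsub (v (S i mod l)) (v i)) (vsub (v j) (v i))).
 { intros i j Hi Hj. destruct (Nat.eq_dec j i). subst. unfold cross, vsub; simpl; nra.
   destruct (Nat.eq_dec j (S i mod l)). subst. rewrite cross_self; lra. left; apply H; auto. }
 assert (Hsl : forall i, (i < l)%nat -> (S i mod l < l)%nat) by (intros; apply Nat.mod_upper_bound; lia).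
 assert (Hsi : forall i, (i < l)%nat -> (S i mod l <> i)%nat).
 { intros i Hi E. destruct (Nat.eq_dec (S i) l). rewrite e, Nat.mod_same in E by lia. lia.
   rewrite Nat.mod_small in E by lia. lia. }
 split; [|split; [|left; auto]].
 - intros i j Hi Hj E. destruct (Nat.eq_dec i j); auto. exfalso.
   destruct (Nat.eq_dec j (S i mod l)).
   + assert (exists k, (k < l)%nat /\ k <> i /\ k <> (S i mod l)%nat) as [k [Hk [Hk1 Hk2]]].
     { destruct (pick3 i (S i mod l)%nat) as [k [Hk [Hk1 Hk2]]]. exists k. split; [lia|auto]. }
     specialize (H i k Hi Hk Hk1 Hk2). rewrite <- e, <- E in H. unfold cross, vsub in H; simpl in H. lra.
   + specialize (H i j Hi Hj ltac:(lia) n0). rewrite E in H. unfold cross, vsub in H; simpl in H. lra.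
 - intros i Hi Hconv.
   set (p := ((i + (l - 1)) mod l)%nat).
   assert (Hp : (p < l)%nat) by (apply Nat.mod_upper_bound; lia).
   assert (Hpi : (S p mod l = i)%nat).
   { unfold p. replace (S ((i + (l-1)) mod l)) with ((i + (l-1)) mod l + 1)%nat by lia.
     rewrite Nat.add_mod_idemp_l by lia. replace (i + (l-1) + 1)%nat with (i + 1 * l)%nat by lia.
     rewrite Nat.mod_add by lia. apply Nat.mod_small; auto. }
   assert (Hpne : p <> i) by (intro E; rewrite E in Hpi; apply (Hsi i Hi); auto).
   assert (Hpsi : p <> (S i mod l)%nat).
   { unfold p. intro E. destruct (Nat.eq_dec (S i) l).
     - rewrite e, Nat.mod_same in E by lia. assert (i + (l - 1) = 1 * l + (l - 2))%nat by lia.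
       rewrite H0, Nat.add_comm, Nat.mod_add in E by lia. rewrite Nat.mod_small in E by lia. lia.
     - rewrite (Nat.mod_small (S i)) in E by lia.
       destruct (Nat.eq_dec i 0) as [Ei|Ei]. rewrite Ei in E. rewrite Nat.add_0_l, Nat.mod_small in E by lia. lia.
       assert (i + (l - 1) = 1 * l + (i - 1))%nat by lia. rewrite H0, Nat.add_comm, Nat.mod_add in E by lia.
       rewrite Nat.mod_small in E by lia. lia. }
   set (e1 := vsub (v i) (v p)). set (e2 := vsub (v (S i mod l)) (v i)).
   assert (Hpos : forall q, (exists j, (j < l)%nat /\ j <> i /\ q = v j) ->
             cross e1 (vsub q (v p)) + cross e2 (vsub q (v i)) > 0).
   { intros q [j [Hj [Hji Eq]]]. subst q.
     pose proof (Hc p j Hp Hj) as A1. pose proof (Hc i j Hi Hj) as A2. rewrite Hpi in A1. fold e1 in A1. fold e2 in A2.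
     destruct (Nat.eq_dec j p).
     + subst j. assert (cross e2 (vsub (v p) (v i)) > 0) by (apply H; auto). lra.
     + assert (cross e1 (vsub (v j) (v p)) > 0). { unfold e1. rewrite <- Hpi at 1. apply H; auto. rewrite Hpi; auto. }
       lra. }
   pose proof (conv_affine_pos (fun p => exists j, (j < l)%nat /\ j <> i /\ p = v j) (vadd e1 e2) (- cross e1 (v p) - cross e2 (v i)) (v i)) as CA.
   assert (Haff : forall q, cross e1 (vsub q (v p)) + cross e2 (vsub q (v i)) = cross (vadd e1 e2) q + (- cross e1 (v p) - cross e2 (v i))).
   { intros q. rewrite !cross_sub_r. destruct q, e1, e2; unfold cross, vadd; simpl. ring. }
   specialize (CA ltac:(intros q Hq; rewrite <- Haff; apply Hpos; auto) Hconv).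
   rewrite <- Haff in CA. unfold e1 in CA at 1. rewrite cross_self in CA.
   unfold e2 in CA. unfold cross, vsub in CA; simpl in CA. lra.
Qed.

Lemma conv_single (a x : V2) : conv (fun p => p = a) x -> x = a.
Proof. intros [n [w [q [H1 [H2 H3]]]]]. subst x.
 rewrite (vsum_ext _ (fun i => vscale (w i) a)). 2:{ intros i Hi. destruct (H1 i Hi) as [_ E]. rewrite E; auto. }
 apply V2_eq. rewrite vsum_fst. rewrite (rsum_ext _ (fun i => fst a * w i)) by (intros; unfold vscale; simpl; ring).
 rewrite rsum_scal, H2; ring.
 rewrite vsum_snd. rewrite (rsum_ext _ (fun i => snd a * w i)) by (intros; unfold vscale; simpl; ring).
 rewrite rsum_scal, H2; ring. Qed.

Lemma pv_seg (v : nat -> V2) : v 0%nat <> v 1%nat -> polygon_vertices v 2.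
Proof. intros Hne. split; [|split].
 - intros i j Hi Hj E. destruct i as [|[|]]; destruct j as [|[|]]; try lia; exfalso; apply Hne; auto.
 - intros i Hi Hc. assert (Hs : forall p, (exists j, (j < 2)%nat /\ j <> i /\ p = v j) -> p = v (1 - i)%nat).
   { intros p [j [Hj [Hji E]]]. subst. f_equal. lia. }
   apply (conv_mono _ _ _ Hs) in Hc. apply conv_single in Hc.
   destruct i as [|[|]]; simpl in Hc; try lia; apply Hne; auto.
 - left. intros i j Hi Hj. destruct i as [|[|]]; destruct j as [|[|]]; try lia; simpl;
   destruct (v 0%nat), (v 1%nat); unfold cross, vsub; simpl; nra. Qed.

Lemma vsum_single (f : nat -> V2) m c : (c < m)%nat -> (forall b, (b < m)%nat -> b <> c -> f b = v0) -> vsum f m = f c.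
Proof. intros Hc H. apply V2_eq.
 rewrite vsum_fst. apply (rsum_single (fun i => fst (f i))); auto. intros. rewrite H; auto.
 rewrite vsum_snd. apply (rsum_single (fun i => snd (f i))); auto. intros. rewrite H; auto. Qed.

Lemma rsum_pos (f : nat -> R) m : (forall b, (b < m)%nat -> 0 <= f b) -> (exists b, (b < m)%nat /\ f b > 0) -> rsum f m > 0.
Proof. intros H [b [Hb Hf]]. induction m; [lia|]. simpl. destruct (Nat.eq_dec b m).
 - subst. assert (0 <= rsum f m) by (apply rsum_nonneg; intros; apply H; lia). lra.
 - assert (rsum f m > 0) by (apply IHm; intros; try apply H; lia). assert (0 <= f m) by (apply H; lia). lra. Qed.

Section Zono.
Variable d : nat -> V2.
Variable n : nat.
Hypothesis Hs : sorted d n.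
Hypothesis Hn : (1 <= n)%nat.
Variable z : V2.

Definition ind j b : bool := andb (Nat.ltb b j) (Nat.leb j (b + n)).
Definition ie j b : R := if ind j b then 1 else 0.
Definition zw j : V2 := vadd z (vsum (fun b => vscale (ie j b) (d b)) n).

Lemma ind_lo j b : (j <= n)%nat -> (b < n)%nat -> ind j b = Nat.ltb b j.
Proof. intros. unfold ind. destruct (Nat.leb_spec j (b+n)); try lia. destruct (Nat.ltb b j); auto. Qed.
Lemma ind_hi j b : (n <= j)%nat -> (j < 2*n)%nat -> (b < n)%nat -> ind j b = Nat.leb (j - n) b.
Proof. intros. unfold ind. destruct (Nat.ltb_spec b j); try lia. destruct (Nat.leb_spec j (b+n)); destruct (Nat.leb_spec (j-n) b); auto; lia. Qed.

Lemma zw_diff a b : vsub (zw a) (zw b) = vsum (fun k => vscale (ie a k - ie b k) (d k)) n.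
Proof. unfold zw. apply V2_eq.
 - unfold vsub, vadd; simpl. rewrite !vsum_fst. unfold vscale; simpl.
   rewrite (rsum_ext (fun i => (ie a i - ie b i) * fst (d i)) (fun i => ie a i * fst (d i) + - (ie b i * fst (d i)))) by (intros; ring).
   rewrite rsum_plus, rsum_opp. ring.
 - unfold vsub, vadd; simpl. rewrite !vsum_snd. unfold vscale; simpl.
   rewrite (rsum_ext (fun i => (ie a i - ie b i) * snd (d i)) (fun i => ie a i * snd (d i) + - (ie b i * snd (d i)))) by (intros; ring).
   rewrite rsum_plus, rsum_opp. ring. Qed.

Lemma zw_edge_lo i : (i < n)%nat -> vsub (zw (S i mod (2*n))) (zw i) = d i.
Proof. intros Hi. rewrite Nat.mod_small by lia. rewrite zw_diff.
 rewrite (vsum_single _ n i Hi).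
 - unfold ie. rewrite !ind_lo by lia. destruct (Nat.ltb_spec i (S i)); destruct (Nat.ltb_spec i i); try lia.
   destruct (d i); unfold vscale; simpl; f_equal; ring.
 - intros b Hb Hbi. unfold ie. rewrite !ind_lo by lia.
   destruct (Nat.ltb_spec b (S i)); destruct (Nat.ltb_spec b i); try lia;
   destruct (d b); unfold vscale, v0; simpl; f_equal; ring. Qed.

Lemma zw_edge_hi i : (n <= i)%nat -> (i < 2*n)%nat -> vsub (zw (S i mod (2*n))) (zw i) = vopp (d (i - n)).
Proof. intros Hi1 Hi2. rewrite zw_diff. rewrite (vsum_single _ n (i-n) ltac:(lia)).
 - unfold ie. destruct (Nat.eq_dec (S i) (2*n)).
   + rewrite e, Nat.mod_same by lia. rewrite ind_lo, ind_hi by lia.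
     destruct (Nat.ltb_spec (i-n) 0); destruct (Nat.leb_spec (i-n) (i-n)); try lia.
     destruct (d (i-n)); unfold vopp, vscale; simpl; f_equal; ring.
   + rewrite Nat.mod_small by lia. rewrite !ind_hi by lia.
     destruct (Nat.leb_spec (S i - n) (i-n)); destruct (Nat.leb_spec (i-n) (i-n)); try lia.
     destruct (d (i-n)); unfold vopp, vscale; simpl; f_equal; ring.
 - intros b Hb Hbi. unfold ie. destruct (Nat.eq_dec (S i) (2*n)).
   + rewrite e, Nat.mod_same by lia. rewrite ind_lo, ind_hi by lia.
     destruct (Nat.ltb_spec b 0); destruct (Nat.leb_spec (i-n) b); try lia;
     destruct (d b); unfold vscale, v0; simpl; f_equal; ring.
   + rewrite Nat.mod_small by lia. rewrite !ind_hi by lia.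
     destruct (Nat.leb_spec (S i - n) b); destruct (Nat.leb_spec (i-n) b); try lia;
     destruct (d b); unfold vscale, v0; simpl; f_equal; ring. Qed.

Lemma ds_pos b j : (b < j)%nat -> (j < n)%nat -> cross (d b) (d j) > 0.
Proof. intros; apply Hs; auto. Qed.
Lemma ds_neg b j : (j < b)%nat -> (b < n)%nat -> cross (d b) (d j) < 0.
Proof. intros. rewrite cross_anti. assert (cross (d j) (d b) > 0) by (apply Hs; auto). lra. Qed.

Lemma ie_01 j b : ie j b = 0 \/ ie j b = 1.
Proof. unfold ie. destruct (ind j b); auto. Qed.

Lemma cross_zw i j e : cross e (vsub (zw j) (zw i)) = rsum (fun b => (ie j b - ie i b) * cross e (d b)) n.
Proof. rewrite zw_diff, cross_vsum_r. apply rsum_ext. intros. apply cross_scal_r. Qed.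

Lemma zw_strict i j : (2 <= n)%nat -> (i < 2*n)%nat -> (j < 2*n)%nat -> j <> i -> j <> (S i mod (2*n))%nat ->
  cross (vsub (zw (S i mod (2*n))) (zw i)) (vsub (zw j) (zw i)) > 0.
Proof. intros Hn2 Hi Hj Hji Hjs. destruct (Nat.lt_ge_cases i n) as [Hin|Hin].
 - rewrite zw_edge_lo by auto. rewrite cross_zw. rewrite Nat.mod_small in Hjs by lia.
   assert (Hiei : forall b, (b < n)%nat -> ie i b = if Nat.ltb b i then 1 else 0).
   { intros b Hb. unfold ie. rewrite ind_lo by lia. auto. }
   apply rsum_pos.
   + intros b Hb. rewrite Hiei by auto. destruct (Nat.ltb_spec b i).
     * pose proof (ds_neg i b H Hin). destruct (ie_01 j b) as [E|E]; rewrite E; nra.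
     * destruct (Nat.eq_dec b i). subst. rewrite cross_self. lra.
       pose proof (ds_pos i b ltac:(lia) Hb). destruct (ie_01 j b) as [E|E]; rewrite E; nra.
   + assert (W : exists b, (b < n)%nat /\ (((b < i)%nat /\ ie j b = 0) \/ ((i < b)%nat /\ ie j b = 1))).
     { unfold ie. destruct (Nat.le_gt_cases j n).
       - destruct (Nat.lt_ge_cases j i).
         + exists j. split; [lia|]. left. split; auto. rewrite ind_lo by lia. destruct (Nat.ltb_spec j j); lia || auto.
         + exists (S i). split; [lia|]. right. split; [lia|]. rewrite ind_lo by lia. destruct (Nat.ltb_spec (S i) j); lia || auto.
       - destruct (Nat.eq_dec i 0).
         + exists (n-1)%nat. split; [lia|]. right. split; [lia|]. rewrite ind_hi by lia. destruct (Nat.leb_spec (j-n) (n-1)); lia || auto.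
         + exists 0%nat. split; [lia|]. left. split; [lia|]. rewrite ind_hi by lia. destruct (Nat.leb_spec (j-n) 0); lia || auto. }
     destruct W as [b [Hb [[Hb1 Hb2]|[Hb1 Hb2]]]]; exists b; split; auto; rewrite Hiei, Hb2 by auto.
     * destruct (Nat.ltb_spec b i); try lia. pose proof (ds_neg i b Hb1 Hin). lra.
     * destruct (Nat.ltb_spec b i); try lia. pose proof (ds_pos i b Hb1 Hb). lra.
 - rewrite zw_edge_hi by auto. rewrite cross_zw. set (c := (i - n)%nat).
   assert (Hiei : forall b, (b < n)%nat -> ie i b = if Nat.leb c b then 1 else 0).
   { intros b Hb. unfold ie. rewrite ind_hi by lia. auto. }
   apply rsum_pos.
   + intros b Hb. rewrite Hiei by auto. rewrite cross_opp_l. destruct (Nat.leb_spec c b).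
     * destruct (Nat.eq_dec b c). subst b. rewrite cross_self. lra.
       pose proof (ds_pos c b ltac:(lia) Hb). destruct (ie_01 j b) as [E|E]; rewrite E; nra.
     * pose proof (ds_neg c b H ltac:(lia)). destruct (ie_01 j b) as [E|E]; rewrite E; nra.
   + assert (W : exists b, (b < n)%nat /\ (((b < c)%nat /\ ie j b = 1) \/ ((c < b)%nat /\ ie j b = 0))).
     { unfold ie. destruct (Nat.le_gt_cases j n).
       - destruct (Nat.eq_dec j 0).
         + subst j. assert (c < n - 1)%nat.
           { destruct (Nat.eq_dec i (2*n-1)). exfalso. apply Hjs. replace (S i) with (2*n)%nat by lia. rewrite Nat.mod_same; lia. unfold c; lia. }
           exists (n-1)%nat. split; [lia|]. right. split; [lia|]. rewrite ind_lo by lia. destruct (Nat.ltb_spec (n-1) 0); lia || auto.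
         + destruct (Nat.eq_dec c 0).
           * exists (n-1)%nat. split; [lia|]. right. split; [lia|]. rewrite ind_lo by lia.
             assert (j <> n) by (intro; subst; apply Hji; unfold c in e; lia).
             destruct (Nat.ltb_spec (n-1) j); lia || auto.
           * exists 0%nat. split; [lia|]. left. split; [lia|]. rewrite ind_lo by lia. destruct (Nat.ltb_spec 0 j); lia || auto.
       - assert (j - n <> c)%nat by (unfold c; lia).
         destruct (Nat.lt_ge_cases (j - n) c).
         + exists (j - n)%nat. split; [lia|]. left. split; [lia|]. rewrite ind_hi by lia. destruct (Nat.leb_spec (j-n) (j-n)); lia || auto.
         + assert (j - n <> S c)%nat.
           { intro E. apply Hjs. rewrite Nat.mod_small. unfold c in E; lia. unfold c in E; lia. }
           exists (S c). split; [lia|]. right. split; [lia|]. rewrite ind_hi by lia. destruct (Nat.leb_spec (j-n) (S c)); lia || auto. }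
     destruct W as [b [Hb [[Hb1 Hb2]|[Hb1 Hb2]]]]; exists b; split; auto; rewrite Hiei, Hb2 by auto; rewrite cross_opp_l.
     * destruct (Nat.leb_spec c b); try lia. pose proof (ds_neg c b Hb1 ltac:(lia)). lra.
     * destruct (Nat.leb_spec c b); try lia. pose proof (ds_pos c b Hb1 Hb). lra. Qed.

Lemma zw_pv : (2 <= n)%nat -> polygon_vertices zw (2*n).
Proof. intros. apply pv_strict. lia. intros; apply zw_strict; auto. Qed.

Lemma zw_per N : seminorm N -> polygon_perimeter N zw (2*n) = 2 * rsum (fun b => N (d b)) n.
Proof. intros HN. unfold polygon_perimeter.
 set (f := fun i => N (vsub (zw (S i mod (2*n))) (zw i))).
 replace (2*n)%nat with (n + n)%nat by lia.
 rewrite rsum_split. unfold f. rewrite (rsum_ext _ (fun b => N (d b))).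
 rewrite (rsum_ext (fun i => N (vsub (zw (S (n + i) mod (2 * n))) (zw (n + i)))) (fun b => N (d b))). ring.
 - intros i Hi. rewrite zw_edge_hi by lia. unfold vopp. rewrite sn_opp by auto. f_equal. f_equal. lia.
 - intros i Hi. rewrite zw_edge_lo by lia. auto. Qed.

End Zono.

Lemma V2_cross_eq x y : (forall e, cross e x = cross e y) -> x = y.
Proof. intros H. pose proof (H (1,0)) as H1. pose proof (H (0,1)) as H2.
 destruct x, y; unfold cross in *; simpl in *. f_equal; lra. Qed.

Lemma cross_v0 e : cross e v0 = 0.
Proof. unfold cross, v0; simpl; ring. Qed.

Lemma regroup (bet : nat -> nat) (h : nat -> R) (F : nat -> R) K n :
  rsum (fun b => rsum (fun k => if Nat.eqb (bet k) b then h k else 0) K * F b) n =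
  rsum (fun k => if Nat.ltb (bet k) n then h k * F (bet k) else 0) K.
Proof.
 rewrite (rsum_ext _ (fun b => rsum (fun k => if Nat.eqb (bet k) b then h k * F b else 0) K)).
 2:{ intros b Hb. rewrite Rmult_comm, <- rsum_scal. apply rsum_ext. intros. destruct (Nat.eqb (bet i) b); ring. }
 rewrite (rsum_exchange (fun b k => if Nat.eqb (bet k) b then h k * F b else 0)).
 apply rsum_ext. intros k Hk. destruct (Nat.ltb_spec (bet k) n).
 - rewrite (rsum_single _ n (bet k)); auto. rewrite Nat.eqb_refl; auto.
   intros b Hb Hne. destruct (Nat.eqb_spec (bet k) b); auto; lia.
 - rewrite (rsum_ext _ (fun _ => 0)). apply rsum_zero. intros b Hb. destruct (Nat.eqb_spec (bet k) b); auto; lia. Qed.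

Lemma sorted_empty (a : nat -> V2) : sorted a 0.
Proof. split; intros; lia. Qed.

Lemma geomB N (HN : seminorm N) K (U : nat -> V2) :
  exists v l, polygon_vertices v l /\
    (forall i, (i < l)%nat -> exists sel : nat -> bool, v i = vsum (fun k => if sel k then U k else v0) K) /\
    polygon_perimeter N v l = 2 * rsum (fun k => N (U k)) K.
Proof.
 destruct (sort_dirs K U 0 (fun _ => v0) (sorted_empty _)) as [n [a [bet [lam [Hs [_ [H2 H3]]]]]]].
 set (ml := fun k => if excluded_middle_informative (U k = v0) then 0 else lam k).
 assert (HU : forall k, (k < K)%nat -> U k = vscale (ml k) (a (bet k))).
 { intros k Hk. unfold ml. destruct (excluded_middle_informative (U k = v0)).
   rewrite e. destruct (a (bet k)); unfold vscale, v0; simpl; f_equal; ring. apply H2; auto. }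
 assert (Hbt : forall k, (k < K)%nat -> ml k <> 0 -> (bet k < n)%nat).
 { intros k Hk Hm. unfold ml in Hm. destruct (excluded_middle_informative (U k = v0)). lra. apply H2; auto. }
 assert (Hml0 : forall k, (k < K)%nat -> (n <= bet k)%nat -> ml k = 0).
 { intros k Hk Hb. destruct (Req_dec (ml k) 0); auto. specialize (Hbt k Hk H). lia. }
 set (wt := fun b => rsum (fun k => if Nat.eqb (bet k) b then Rabs (ml k) else 0) K).
 assert (Hwt : forall b, (b < n)%nat -> wt b > 0).
 { intros b Hb. destruct (H3 b Hb) as [[b0 [Hb0 _]]|[k [Hk [Hk1 Hk2]]]]. lia.
   apply rsum_pos. intros b1 Hb1. destruct (Nat.eqb (bet b1) b); [apply Rabs_pos|lra].
   exists k. split; auto. rewrite Hk2, Nat.eqb_refl. apply Rabs_pos_lt. unfold ml.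
   destruct (excluded_middle_informative (U k = v0)). contradiction.
   intro E. apply Hk1. destruct (H2 k Hk Hk1) as [_ Eu]. rewrite Eu, E. destruct (a (bet k)); unfold vscale, v0; simpl; f_equal; ring. }
 set (d := fun b => vscale (wt b) (a b)).
 assert (Hds : sorted d n) by (apply sorted_scale; auto).
 set (neg := fun k => if Rlt_dec (ml k) 0 then true else false).
 set (pos := fun k => if Rlt_dec 0 (ml k) then true else false).
 set (z := vsum (fun k => if neg k then U k else v0) K).
 assert (Hsum : rsum (fun k => N (U k)) K = rsum (fun b => N (d b)) n).
 { rewrite (rsum_ext (fun b => N (d b)) (fun b => wt b * N (a b))).
   2:{ intros b Hb. unfold d. rewrite sn_hom by auto. rewrite Rabs_right; auto. left; apply Hwt; auto. }
   unfold wt. rewrite regroup. apply rsum_ext. intros k Hk. rewrite HU by auto. rewrite sn_hom by auto.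
   destruct (Nat.ltb_spec (bet k) n); auto. rewrite Hml0 by auto. rewrite Rabs_R0; ring. }
 destruct (Nat.eq_dec n 0) as [Hn0|Hn0].
 - exists (fun _ => v0), 0%nat. split; [|split].
   + split; [intros; lia|split; [intros; lia|left; intros; lia]].
   + intros; lia.
   + rewrite Hsum, Hn0. simpl. unfold polygon_perimeter. simpl. ring.
 - exists (zw d n z), (2 * n)%nat. split; [|split].
   + destruct (Nat.eq_dec n 1).
     * subst n. apply pv_seg. intro E. pose proof (zw_edge_lo d 1 ltac:(lia) z 0 ltac:(lia)) as Ed.
       replace (S 0 mod (2*1))%nat with 1%nat in Ed by reflexivity. rewrite E in Ed.
       assert (vsub (zw d 1 z 1) (zw d 1 z 1) = v0) by (destruct (zw d 1 z 1); unfold vsub, v0; simpl; f_equal; ring).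
       rewrite H in Ed. unfold d in Ed.
       pose proof (Hwt 0%nat ltac:(lia)). pose proof (inH_nz (a 0%nat) (proj1 Hs 0%nat ltac:(lia))).
       apply H1. destruct (a 0%nat); unfold vscale, v0 in *; simpl in *. inversion Ed. f_equal.
       apply (Rmult_eq_reg_l (wt 0%nat)); lra. apply (Rmult_eq_reg_l (wt 0%nat)); lra.
     * apply zw_pv; auto; lia.
   + intros j Hj. exists (fun k => orb (andb (ind n j (bet k)) (pos k)) (andb (negb (ind n j (bet k))) (neg k))).
     apply V2_cross_eq. intro e. unfold zw. rewrite cross_add_r, !cross_vsum_r. unfold z. rewrite cross_vsum_r.
     rewrite (rsum_ext (fun i => cross e (vscale (ie n j i) (d i))) (fun b => rsum (fun k => if Nat.eqb (bet k) b then Rabs (ml k) else 0) K * (ie n j b * cross e (a b)))).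
     2:{ intros b Hb. unfold d. rewrite cross_scal_r, cross_scal_r. fold (wt b). ring. }
     rewrite regroup. rewrite <- rsum_plus. apply rsum_ext. intros k Hk.
     rewrite HU by auto.
     destruct (Nat.ltb_spec (bet k) n).
     * unfold ie, neg, pos. destruct (ind n j (bet k)); destruct (Rlt_dec (ml k) 0); destruct (Rlt_dec 0 (ml k)); simpl;
       rewrite ?cross_scal_r, ?cross_v0;
       try (rewrite Rabs_right by lra); try (rewrite Rabs_left by lra); try lra.
       all: assert (ml k = 0) by lra; rewrite H0; ring.
     * rewrite Hml0 by auto. destruct (orb _ _); destruct (neg k); rewrite ?cross_scal_r, ?cross_v0; ring.
   + rewrite zw_per by (auto; lia). rewrite Hsum. auto. Qed.

Lemma pred_ext {X : Type} (P Q : X -> Prop) : (forall x, P x <-> Q x) -> P = Q.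
Proof. intros H. apply functional_extensionality. intros x. apply propositional_extensionality. auto. Qed.

Lemma sum_f_rsum f n : sum_f_R0 f n = rsum f (S n).
Proof. induction n as [|n IH]. simpl; ring. simpl sum_f_R0. rewrite IH. simpl. auto. Qed.

Lemma Un_cv_eventually (u : nat -> R) l N0 : (forall n, (n >= N0)%nat -> u n = l) -> Un_cv u l.
Proof. intros H eps He. exists N0. intros n Hn. rewrite H by auto. unfold R_dist. rewrite Rminus_diag_eq, Rabs_R0; auto. Qed.

Section Meas.
Variable X : Type.
Variable Sigma : (X -> Prop) -> Prop.
Hypothesis HS : sigma_algebra Sigma.
Variable mu : (X -> Prop) -> V2.
Hypothesis Hmu : vector_measure Sigma mu.

Definition emp : X -> Prop := fun _ => ~ True.

Lemma S_emp : Sigma emp.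
Proof. destruct HS as [H1 [H2 H3]]. apply H2. auto. Qed.
Lemma S_compl E : Sigma E -> Sigma (fun x => ~ E x).
Proof. destruct HS as [H1 [H2 H3]]. auto. Qed.
Lemma S_union (G : nat -> X -> Prop) : (forall n, Sigma (G n)) -> Sigma (fun x => exists n, G n x).
Proof. destruct HS as [H1 [H2 H3]]. auto. Qed.
Lemma S_inter E F : Sigma E -> Sigma F -> Sigma (fun x => E x /\ F x).
Proof. intros HE HF.
 set (G := fun n : nat => if Nat.eqb n 0 then (fun x => ~ E x) else (fun x => ~ F x)).
 assert (Sigma (fun x => ~ exists n, G n x)).
 { apply S_compl. apply S_union. intros n. unfold G. destruct (Nat.eqb n 0); apply S_compl; auto. }
 replace (fun x => E x /\ F x) with (fun x => ~ exists n, G n x); auto.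
 apply pred_ext. intros x. split.
 - intros H0. split; apply NNPP; intro Hn; apply H0; [exists 0%nat|exists 1%nat]; auto.
 - intros [He Hf] [k Hk]. unfold G in Hk. destruct (Nat.eqb k 0); auto. Qed.
Lemma S_diff E F : Sigma E -> Sigma F -> Sigma (fun x => E x /\ ~ F x).
Proof. intros. apply S_inter; auto. apply S_compl; auto. Qed.

Lemma mu_emp : mu emp = v0.
Proof. pose proof (Hmu (fun _ => emp) (fun _ => S_emp) ltac:(intros n m x _ H; destruct H; auto)) as [H1 H2].
 assert (E : (fun x => exists _ : nat, emp x) = emp) by (apply pred_ext; intros x; split; [intros [_ H]; auto|intros H; exists 0%nat; auto]).
 rewrite E in H1, H2.
 assert (Z : forall c, Un_cv (fun n => sum_f_R0 (fun _ => c) n) c -> c = 0).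
 { intros c Hc. destruct (Req_dec c 0); auto. exfalso.
   destruct (Hc (Rabs c / 2)) as [N0 HN0]. apply Rdiv_lt_0_compat; [apply Rabs_pos_lt; auto|lra].
   specialize (HN0 (S N0) ltac:(lia)). rewrite sum_f_rsum in HN0.
   rewrite (rsum_ext _ (fun _ => c * 1)) in HN0 by (intros; ring). rewrite rsum_scal in HN0.
   assert (R1 : forall k, rsum (fun _ => 1) k = INR k). { induction k; simpl; auto. rewrite IHk. destruct k; simpl; lra. }
   rewrite R1 in HN0. unfold R_dist in HN0.
   replace (c * INR (S (S N0)) - c) with (c * INR (S N0)) in HN0 by (rewrite !S_INR; ring).
   rewrite Rabs_mult in HN0. rewrite (Rabs_right (INR (S N0))) in HN0 by (apply Rle_ge, pos_INR).
   assert (1 <= INR (S N0)) by (rewrite S_INR; pose proof (pos_INR N0); lra).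
   pose proof (Rabs_pos_lt c H). nra. }
 apply V2_eq; simpl; [apply Z; auto|apply Z; auto]. Qed.

Lemma fin_add m (E : nat -> X -> Prop) (sel : nat -> bool) :
  (forall i, (i < m)%nat -> Sigma (E i)) ->
  (forall i j x, (i < m)%nat -> (j < m)%nat -> i <> j -> E i x -> E j x -> False) ->
  Sigma (fun x => exists k, (k < m)%nat /\ sel k = true /\ E k x) /\
  mu (fun x => exists k, (k < m)%nat /\ sel k = true /\ E k x) = vsum (fun k => if sel k then mu (E k) else v0) m.
Proof. intros HE Hdis.
 set (G := fun n => if andb (Nat.ltb n m) (sel n) then E n else emp).
 assert (HG : forall n, Sigma (G n)).
 { intros n. unfold G. destruct (Nat.ltb_spec n m); destruct (sel n); simpl; auto using S_emp. }
 assert (EU : (fun x => exists k, (k < m)%nat /\ sel k = true /\ E k x) = (fun x => exists n, G n x)).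
 { apply pred_ext. intros x. split.
   - intros [k [Hk [Hs Hx]]]. exists k. unfold G. destruct (Nat.ltb_spec k m); try lia. rewrite Hs; auto.
   - intros [k Hk]. unfold G in Hk. destruct (Nat.ltb_spec k m); destruct (sel k) eqn:Hs; simpl in Hk;
     try (destruct Hk; auto). exists k; auto. }
 rewrite EU. split. apply S_union; auto.
 assert (Hd : forall n m0 x, n <> m0 -> G n x -> G m0 x -> False).
 { intros a b x Hab Ha Hb. unfold G in Ha, Hb. destruct (Nat.ltb_spec a m); destruct (sel a); simpl in Ha; try (destruct Ha; auto);
   destruct (Nat.ltb_spec b m); destruct (sel b); simpl in Hb; try (destruct Hb; auto). eapply Hdis; eauto. }
 destruct (Hmu G HG Hd) as [H1 H2].
 assert (Hval : forall i, mu (G i) = if andb (Nat.ltb i m) (sel i) then mu (E i) else v0).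
 { intros i. unfold G. destruct (andb _ _); auto. apply mu_emp. }
 assert (Hps : forall (pr : V2 -> R), pr v0 = 0 -> forall n, (n >= m)%nat ->
     sum_f_R0 (fun i => pr (mu (G i))) n = rsum (fun k => pr (if sel k then mu (E k) else v0)) m).
 { intros pr Hpr n Hn. rewrite sum_f_rsum. replace (S n) with (m + (S n - m))%nat by lia. rewrite rsum_split.
   rewrite (rsum_ext (fun i => pr (mu (G (m + i)%nat))) (fun _ => 0)). rewrite rsum_zero, Rplus_0_r.
   apply rsum_ext. intros i Hi. rewrite Hval. destruct (Nat.ltb_spec i m); try lia. simpl. auto.
   intros i Hi. rewrite Hval. destruct (Nat.ltb_spec (m+i) m); try lia. simpl. auto. }
 apply V2_eq.
 - rewrite vsum_fst. eapply UL_sequence. apply H1. apply (Un_cv_eventually _ _ m). intros n Hn.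
   rewrite (Hps fst) by auto. apply rsum_ext. intros; destruct (sel i); auto.
 - rewrite vsum_snd. eapply UL_sequence. apply H2. apply (Un_cv_eventually _ _ m). intros n Hn.
   rewrite (Hps snd) by auto. apply rsum_ext. intros; destruct (sel i); auto. Qed.

End Meas.

Lemma cross_if e (b : bool) x : cross e (if b then x else v0) = if b then cross e x else 0.
Proof. destruct b; auto. apply cross_v0. Qed.

Section Refine.
Variable X : Type.
Variable Sigma : (X -> Prop) -> Prop.
Hypothesis HS : sigma_algebra Sigma.
Variable mu : (X -> Prop) -> V2.
Hypothesis Hmu : vector_measure Sigma mu.
Variable A : X -> Prop.
Hypothesis HA : Sigma A.

Definition dcover (F : nat -> X -> Prop) K : Prop :=
  (forall k, (k < K)%nat -> Sigma (F k)) /\ (forall k x, (k < K)%nat -> F k x -> A x) /\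
  (forall i j x, (i < K)%nat -> (j < K)%nat -> i <> j -> F i x -> F j x -> False) /\
  (forall x, A x -> exists k, (k < K)%nat /\ F k x).

Definition Rep (F : nat -> X -> Prop) K (E : X -> Prop) : Prop :=
  exists c : nat -> bool, mu E = vsum (fun k => if c k then mu (F k) else v0) K.

Lemma dcover_init : dcover (fun _ => A) 1.
Proof. split; [|split; [|split]]; auto. intros; lia. intros x Hx. exists 0%nat; auto. Qed.

Lemma mu_split E F : Sigma E -> Sigma F -> mu F = vadd (mu (fun x => F x /\ E x)) (mu (fun x => F x /\ ~ E x)).
Proof. intros HE HF.
 set (G := fun k : nat => if Nat.eqb k 0 then (fun x => F x /\ E x) else (fun x => F x /\ ~ E x)).
 destruct (fin_add X Sigma HS mu Hmu 2 G (fun _ => true)) as [_ Hadd].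
 - intros i Hi. unfold G. destruct (Nat.eqb i 0). apply S_inter; auto. apply S_diff; auto.
 - intros i j x Hi Hj Hij Hx1 Hx2. unfold G in *. destruct i as [|[|]]; destruct j as [|[|]]; try lia; simpl in *; tauto.
 - replace (fun x => exists k, (k < 2)%nat /\ true = true /\ G k x) with F in Hadd.
   rewrite Hadd. simpl. unfold G; simpl. destruct (mu (fun x => F x /\ E x)), (mu (fun x => F x /\ ~ E x)).
   unfold vadd, v0; simpl; f_equal; ring.
   apply pred_ext. intros x. split.
   + intros Hx. destruct (classic (E x)). exists 0%nat; unfold G; simpl; auto. exists 1%nat; unfold G; simpl; auto.
   + intros [k [Hk [_ Hx]]]. unfold G in Hx. destruct (Nat.eqb k 0); tauto. Qed.

Lemma refine1 F K E : dcover F K -> Sigma E -> (forall x, E x -> A x) ->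
  exists F' K', dcover F' K' /\ Rep F' K' E /\ (forall E', Rep F K E' -> Rep F' K' E').
Proof. intros [HF1 [HF2 [HF3 HF4]]] HE HEA.
 set (F' := fun j => if Nat.ltb j K then (fun x => F j x /\ E x) else (fun x => F (j - K)%nat x /\ ~ E x)).
 assert (F'lo : forall j, (j < K)%nat -> F' j = (fun x => F j x /\ E x)).
 { intros j Hj. unfold F'. destruct (Nat.ltb_spec j K); auto; lia. }
 assert (F'hi : forall j, (K <= j)%nat -> F' j = (fun x => F (j - K)%nat x /\ ~ E x)).
 { intros j Hj. unfold F'. destruct (Nat.ltb_spec j K); auto; lia. }
 assert (Hdc : dcover F' (K + K)).
 { split; [|split; [|split]].
   - intros k Hk. destruct (Nat.lt_ge_cases k K). rewrite F'lo by auto. apply S_inter; auto.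
     rewrite F'hi by auto. apply S_diff; auto. apply HF1; lia.
   - intros k x Hk Hx. destruct (Nat.lt_ge_cases k K). rewrite F'lo in Hx by auto. apply (HF2 k); tauto.
     rewrite F'hi in Hx by auto. apply (HF2 (k-K)%nat); try lia. tauto.
   - intros i j x Hi Hj Hij Hxi Hxj.
     destruct (Nat.lt_ge_cases i K); destruct (Nat.lt_ge_cases j K);
     [rewrite F'lo in Hxi, Hxj by auto|rewrite F'lo in Hxi by auto; rewrite F'hi in Hxj by auto
     |rewrite F'hi in Hxi by auto; rewrite F'lo in Hxj by auto|rewrite F'hi in Hxi, Hxj by auto].
     + apply (HF3 i j x); tauto.
     + tauto.
     + tauto.
     + apply (HF3 (i-K)%nat (j-K)%nat x); try lia; tauto.
   - intros x Hx. destruct (HF4 x Hx) as [k [Hk Hkx]]. destruct (classic (E x)).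
     exists k. split; [lia|]. rewrite F'lo by auto. auto.
     exists (K + k)%nat. split; [lia|]. rewrite F'hi by lia. replace (K + k - K)%nat with k by lia. auto. }
 exists F', (K + K)%nat. split; [auto|split].
 - exists (fun j => Nat.ltb j K).
   destruct (fin_add X Sigma HS mu Hmu (K+K) F' (fun j => Nat.ltb j K)) as [_ Hadd].
   apply Hdc. apply Hdc. rewrite <- Hadd. f_equal. apply pred_ext. intros x. split.
   + intros Hx. destruct (HF4 x (HEA x Hx)) as [k [Hk Hkx]]. exists k. split; [lia|]. split.
     destruct (Nat.ltb_spec k K); auto; lia. rewrite F'lo by auto. auto.
   + intros [k [Hk [Hs Hx]]]. destruct (Nat.ltb_spec k K); try discriminate. rewrite F'lo in Hx by auto. tauto.
 - intros E' [c Hc]. exists (fun j => if Nat.ltb j K then c j else c (j - K)%nat). rewrite Hc.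
   apply V2_cross_eq. intros e. rewrite !cross_vsum_r. rewrite rsum_split.
   rewrite <- rsum_plus. apply rsum_ext. intros k Hk. rewrite !cross_if.
   destruct (Nat.ltb_spec k K); try lia. destruct (Nat.ltb_spec (K + k) K); try lia.
   replace (K + k - K)%nat with k by lia. rewrite F'lo, F'hi by lia. replace (K + k - K)%nat with k by lia.
   rewrite (mu_split E (F k)) by auto. destruct (c k); [rewrite cross_add_r; auto|ring]. Qed.

Lemma refine_list F K n (G : nat -> X -> Prop) : dcover F K ->
  (forall j, (j < n)%nat -> Sigma (G j) /\ (forall x, G j x -> A x)) ->
  exists F' K', dcover F' K' /\ (forall j, (j < n)%nat -> Rep F' K' (G j)) /\ (forall E, Rep F K E -> Rep F' K' E).
Proof. intros Hd HG. induction n.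
 - exists F, K. split; auto. split. intros; lia. auto.
 - destruct IHn as [F1 [K1 [Hd1 [HR1 HP1]]]]. intros; apply HG; lia.
   destruct (HG n ltac:(lia)) as [HGn HGnA].
   destruct (refine1 F1 K1 (G n) Hd1 HGn HGnA) as [F2 [K2 [Hd2 [HR2 HP2]]]].
   exists F2, K2. split; auto. split.
   + intros j Hj. destruct (Nat.eq_dec j n). subst; auto. apply HP2, HR1; lia.
   + intros E HE. auto. Qed.

Lemma rep_comb F K n (w : nat -> R) (E : nat -> X -> Prop) :
  (forall j, (j < n)%nat -> 0 <= w j /\ Rep F K (E j)) ->
  exists t : nat -> R, (forall k, (k < K)%nat -> 0 <= t k <= rsum w n) /\
    vsum (fun j => vscale (w j) (mu (E j))) n = vsum (fun k => vscale (t k) (mu (F k))) K.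
Proof. induction n; intros H.
 - exists (fun _ => 0). split. intros; simpl; lra. apply V2_cross_eq. intros e. rewrite !cross_vsum_r.
   simpl. rewrite (rsum_ext _ (fun _ => 0)). rewrite rsum_zero; auto. intros; rewrite cross_scal_r; ring.
 - destruct IHn as [t [Ht E1]]. intros; apply H; lia.
   destruct (H n ltac:(lia)) as [Hw [c Hc]].
   exists (fun k => t k + (if c k then w n else 0)). split.
   + intros k Hk. specialize (Ht k Hk). simpl. destruct (c k); lra.
   + simpl. rewrite E1, Hc. apply V2_cross_eq. intros e. rewrite cross_add_r, !cross_vsum_r, cross_scal_r, cross_vsum_r.
     rewrite <- rsum_scal, <- rsum_plus. apply rsum_ext. intros k Hk. rewrite cross_if, !cross_scal_r.
     destruct (c k); ring. Qed.

End Refine.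

Lemma choice_nat {T : Type} (P : nat -> T -> Prop) : (forall j, exists x, P j x) -> exists f, forall j, P j (f j).
Proof. intros H. exists (fun j => proj1_sig (constructive_indefinite_description _ (H j))).
 intros j. apply (proj2_sig (constructive_indefinite_description _ (H j))). Qed.

Lemma conv_point (S : V2 -> Prop) p : S p -> conv S p.
Proof. intros H. exists 1%nat, (fun _ => 1), (fun _ => p). split; [|split].
 intros i Hi; split; auto; lra. simpl; lra. simpl. destruct p; unfold vadd, vscale, v0; simpl; f_equal; ring. Qed.

Lemma closure_self (S : V2 -> Prop) p : S p -> closure S p.
Proof. intros H eps He. exists p. split; auto. rewrite !Rminus_diag_eq by auto. rewrite Rabs_R0. lra. Qed.

Section Final.
Variable N : V2 -> R.
Hypothesis HN : seminorm N.
Variable X : Type.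
Variable Sigma : (X -> Prop) -> Prop.
Hypothesis HS : sigma_algebra Sigma.
Variable mu : (X -> Prop) -> V2.
Hypothesis Hmu : vector_measure Sigma mu.
Variable A : X -> Prop.
Hypothesis HA : Sigma A.

Definition values : V2 -> Prop := fun v => exists E, Sigma E /\ (forall x, E x -> A x) /\ v = mu E.

Lemma B_meas r : total_variation_set N Sigma mu A r -> perimeter_set N (vrange Sigma mu A) (2 * r).
Proof. intros [m [E [HE1 [HE2 [HE3 Hr]]]]].
 destruct (geomB N HN m (fun k => mu (E k))) as [v [l [Hpv [Hsel Hper]]]].
 exists v, l. split; auto. split.
 - intros p Hp. unfold vrange. apply closure_self. eapply conv_mono; [|exact Hp].
   intros q [i [Hi Eq]]. subst q. destruct (Hsel i Hi) as [sel Esel]. rewrite Esel.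
   destruct (fin_add X Sigma HS mu Hmu m E sel HE1 HE3) as [HS1 HS2].
   exists (fun x => exists k, (k < m)%nat /\ sel k = true /\ E k x). split; auto. split.
   intros x [k [Hk [_ Hx]]]. eapply HE2; eauto. auto.
 - rewrite Hper, Hr. auto. Qed.

Definition RepPt F K q := exists n (w : nat -> R) (E : nat -> X -> Prop),
  (forall j, (j < n)%nat -> 0 <= w j /\ Rep X mu F K (E j)) /\ rsum w n = 1 /\
  q = vsum (fun j => vscale (w j) (mu (E j))) n.

Lemma conv_values_data q : conv values q -> exists n (w : nat -> R) (E : nat -> X -> Prop),
  (forall j, (j < n)%nat -> 0 <= w j /\ Sigma (E j) /\ (forall x, E j x -> A x)) /\ rsum w n = 1 /\
  q = vsum (fun j => vscale (w j) (mu (E j))) n.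
Proof. intros [n [w [Q [H1 [H2 H3]]]]].
 destruct (choice_nat (fun j E => (j < n)%nat -> Sigma E /\ (forall x, E x -> A x) /\ Q j = mu E)) as [Ef HEf].
 { intros j. destruct (Nat.lt_ge_cases j n).
   - destruct (H1 j H) as [_ [E [HE1 [HE2 HE3]]]]. exists E. auto.
   - exists A. intros; lia. }
 exists n, w, Ef. split; [|split]; auto.
 - intros j Hj. destruct (H1 j Hj). destruct (HEf j Hj) as [? [? ?]]. auto.
 - rewrite H3. apply vsum_ext. intros i Hi. destruct (HEf i Hi) as [_ [_ E]]. rewrite E. auto. Qed.

Lemma A_meas s : (forall r, total_variation_set N Sigma mu A r -> r <= s) ->
  forall P, perimeter_set N (vrange Sigma mu A) P -> P <= 2 * s.
Proof. intros Hs P [v [l [Hpv [Hin EP]]]]. subst P.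
 apply (eps_le _ _ (4 * (N (1,0) + N (0,1)))).
 { pose proof (sn_nonneg N HN (1,0)). pose proof (sn_nonneg N HN (0,1)). lra. }
 intros dl Hdl.
 assert (Hq : forall i, exists q, (i < l)%nat -> conv values q /\ Rabs (fst (v i) - fst q) < dl /\ Rabs (snd (v i) - snd q) < dl).
 { intros i. destruct (Nat.lt_ge_cases i l).
   - assert (Hvi : vrange Sigma mu A (v i)). { apply Hin. apply conv_point. exists i; auto. }
     destruct (Hvi dl Hdl) as [q [Hq1 Hq2]]. exists q. intros _. split; auto.
   - exists v0. intros; lia. }
 destruct (choice_nat _ Hq) as [qf Hqf].
 assert (Hrep : forall l', (l' <= l)%nat -> exists F K, dcover X Sigma A F K /\ forall i, (i < l')%nat -> RepPt F K (qf i)).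
 { induction l'.
   - intros _. exists (fun _ => A), 1%nat. split. apply dcover_init; auto. intros; lia.
   - intros Hl'. destruct IHl' as [F [K [Hd HR]]]. lia.
     destruct (Hqf l' ltac:(lia)) as [Hc _].
     destruct (conv_values_data _ Hc) as [n [w [E [HE1 [HE2 HE3]]]]].
     destruct (refine_list X Sigma HS mu Hmu A F K n E Hd) as [F' [K' [Hd' [HR' HP']]]].
     { intros j Hj. destruct (HE1 j Hj) as [_ [? ?]]. auto. }
     exists F', K'. split; auto. intros i Hi. destruct (Nat.eq_dec i l').
     + subst. exists n, w, E. split; auto. intros j Hj. split. apply HE1; auto. apply HR'; auto.
     + destruct (HR i ltac:(lia)) as [n1 [w0 [E0 [H01 [H02 H03]]]]]. exists n1, w0, E0. split; auto.
       intros j Hj. destruct (H01 j Hj). split; auto. }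
 destruct (Hrep l ltac:(lia)) as [F [K [[HF1 [HF2 [HF3 HF4]]] HR]]].
 set (U := fun k => if Nat.ltb k K then mu (F k) else if Nat.eqb k K then (2 * dl, 0) else (0, 2 * dl)).
 set (z0 := (- dl, - dl)).
 assert (HZ : forall i, (i < l)%nat -> inZ z0 U (S (S K)) (v i)).
 { intros i Hi. destruct (HR i Hi) as [n [w [E [H1 [H2 H3]]]]].
   destruct (rep_comb X mu F K n w E H1) as [t [Ht Et]]. rewrite H2 in Ht.
   destruct (Hqf i Hi) as [_ [Hx Hy]].
   set (s1 := (fst (v i) - fst (qf i) + dl) / (2 * dl)). set (s2 := (snd (v i) - snd (qf i) + dl) / (2 * dl)).
   exists (fun k => if Nat.ltb k K then t k else if Nat.eqb k K then s1 else s2). split.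
   - intros k Hk. destruct (Nat.ltb_spec k K). apply Ht; auto. destruct (Nat.eqb_spec k K).
     + unfold s1. apply Rabs_def2 in Hx. split. apply Rmult_le_pos. lra. left; apply Rinv_0_lt_compat; lra.
       apply (Rmult_le_reg_r (2*dl)). lra. unfold Rdiv. rewrite Rmult_assoc, Rinv_l; lra.
     + unfold s2. apply Rabs_def2 in Hy. split. apply Rmult_le_pos. lra. left; apply Rinv_0_lt_compat; lra.
       apply (Rmult_le_reg_r (2*dl)). lra. unfold Rdiv. rewrite Rmult_assoc, Rinv_l; lra.
   - assert (E1: Nat.ltb K K = false) by (apply Nat.ltb_irrefl). assert (E2: Nat.eqb K K = true) by apply Nat.eqb_refl.
     assert (E3: Nat.ltb (S K) K = false) by (apply Nat.ltb_ge; lia). assert (E4: Nat.eqb (S K) K = false) by (apply Nat.eqb_neq; lia).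
     change (vsum ?f (S (S K))) with (vadd (vadd (vsum f K) (f K)) (f (S K))). cbv beta.
     rewrite (vsum_ext _ (fun k => vscale (t k) (mu (F k)))).
     2:{ intros k Hk. destruct (Nat.ltb_spec k K); try lia. unfold U. destruct (Nat.ltb_spec k K); try lia. auto. }
     rewrite <- Et, <- H3. unfold U. rewrite E1, E2, E3, E4.
     unfold z0, s1, s2. destruct (v i) as [a b], (qf i) as [c d]. unfold vadd, vscale; simpl.
     f_equal; field; lra. }
 pose proof (coreA_poly N HN v l Hpv (S (S K)) U z0 HZ) as HA1.
 assert (HTV : rsum (fun k => N (mu (F k))) K <= s).
 { apply Hs. exists K, F. split; [|split; [|split]]; auto. }
 simpl in HA1. unfold U at 2 3 in HA1. destruct (Nat.ltb_spec K K); try lia. rewrite Nat.eqb_refl in HA1.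
 destruct (Nat.ltb_spec (S K) K); try lia. destruct (Nat.eqb_spec (S K) K); try lia.
 rewrite (rsum_ext (fun k => N (U k)) (fun k => N (mu (F k)))) in HA1.
 2:{ intros k Hk. unfold U. destruct (Nat.ltb_spec k K); try lia. auto. }
 replace (2 * dl, 0) with (vscale (2 * dl) (1,0)) in HA1 by (unfold vscale; simpl; f_equal; ring).
 replace (0, 2 * dl) with (vscale (2 * dl) (0,1)) in HA1 by (unfold vscale; simpl; f_equal; ring).
 rewrite !sn_hom, Rabs_right in HA1 by (auto || lra). lra. Qed.

End Final.

Theorem theorem1p6 (N : V2 -> R) (HN : seminorm N)
  (X : Type) (Sigma : (X -> Prop) -> Prop) (HS : sigma_algebra Sigma)
  (mu : (X -> Prop) -> V2) (Hmu : vector_measure Sigma mu)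
  (A : X -> Prop) (HA : Sigma A) :
  forall s : R,
    is_lub (total_variation_set N Sigma mu A) s <->
    is_lub (perimeter_set N (vrange Sigma mu A)) (2 * s).
Proof.
 intros s. split.
 - intros [Hub Hleast]. split.
   + intros P HP. apply (A_meas N HN X Sigma HS mu Hmu A HA s); auto.
   + intros b Hb. assert (s <= b / 2).
     { apply Hleast. intros r Hr. pose proof (Hb _ (B_meas N HN X Sigma HS mu Hmu A r Hr)). lra. }
     lra.
 - intros [Hub Hleast]. split.
   + intros r Hr. pose proof (Hub _ (B_meas N HN X Sigma HS mu Hmu A r Hr)). lra.
   + intros t Ht. assert (2 * s <= 2 * t).
     { apply Hleast. intros P HP. apply (A_meas N HN X Sigma HS mu Hmu A HA t); auto. }
     lra.
Qed.
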